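(* Suppose assumptions (A1)–(A5) below hold. Then the maximum likelihood estimation problem $$\max_{(x_t,\theta_t,u_t)}\ \sum_{i=0}^{n_x}\log p_\nu(\tilde x_{t_i}-Dx_{t_i})+\sum_{j=0}^{n_u}\log p_\omega(\tilde y_{\tau_j}-Cu_{\tau_j})$$ subject to, for all $t$: $u_t\in\arg\max\{f(x_{t+1},u,\theta_t,\pi_t):x_{t+1}=h(x_t,u),\ u\in\mathcal U\}$, $x_{t+1}=h(x_t,u_t)$, $\theta_{t+1}=g(x_t,u_t,\theta_t,\pi_t)$, $x_t\in\mathcal X$, $\theta_t\in\Theta$ (with the incentives $\pi_t$ given), can be expressed as a mixed integer linear program.
   Context: Model. Let $\mathcal X,\mathcal U,\Pi,\Theta$ be compact finite-dimensional sets with $\mathcal X,\mathcal U,\Theta$ convex. At each discrete time $t$ an agent has system state $x_t\in\mathcal X$, motivational state $\theta_t\in\Theta$, decision $u_t\in\mathcal U$; the coordinator applies known incentive $\pi_t\in\Pi$. Observations: $\tilde x_{t_i}=Dx_{t_i}+\nu_{t_i}$ ($i=0,\dots,n_x$), $\tilde y_{\tau_i}=Cu_{\tau_i}+\omega_{\tau_i}$ ($i=0,\dots,n_u$), with known matrices $C,D$ and noise densities $p_\nu,p_\omega$. $(a;b)$ denotes vertical concatenation. Assumptions: (A1) $\mathcal X,\mathcal U,\Pi,\Theta$ bounded finite-dimensional; $\mathcal X,\mathcal U,\Theta$ convex polyhedra described by finitely many linear inequalities; $\Pi$ described by finitely many mixed integer linear constraints. (A2) $f:\mathcal X\times\mathcal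 U\times\Theta\times\Pi\to\mathbb R$ deterministic, concave in $x$, strictly concave in $u$, concave in $\theta$, with $f(x,u,\theta,\pi)=-(x;u)^TQ(x;u)+(\theta;\pi)^TH(x;u)+\sum_{i=1}^K\min_{j\in J_i}\{F_{i,j}(x;u;\theta;\pi)+\zeta_{i,j}\}$, $Q$ positive semidefinite, $H,F_{i,j}$ matrices, $\zeta_{i,j}$ scalars, $J_i$ finite index sets. (A3) $h,g$ deterministic surjective with $h(x,u)=Ax+Bu+k$ and $g(x,u,\theta,\pi)=G_i(x;u;\theta;\pi)+\chi_i$ whenever $B_i(x;u;\theta;\pi)\le\psi_i$ (finitely many $i$), the polytopes $\{B_i(\cdot)\le\psi_i\}$ having disjoint interiors. (A4) Noise sequences $\{\nu_{t_i}\},\{\omega_{\tau_i}\}$ i.i.d. with i.i.d. components, zero mean and known finite variance; $\log p_\nu,\log p_\omega$ expressible using integer linear constraints. (A5) Observability: there exist $T$ and an incentive sequence such that $(x_0,\theta_0)$ can be computed exactly from noiseless measurements on $0\le t\le T$. *)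

(* Defs.v *)
From HB Require Import structures.
From mathcomp Require Import all_boot all_order all_algebra.
From mathcomp Require Import all_classical all_reals all_analysis.

Set Implicit Arguments.
Unset Strict Implicit.
Unset Printing Implicit Defensive.

Import Order.TTheory GRing.Theory Num.Theory.
Local Open Scope ring_scope.

Definition leV (R : numDomainType) (n : nat) (u v : 'cV[R]_n) : Prop :=
  forall i, u i 0 <= v i 0.

Definition polyhedron (R : numDomainType) (n : nat) (S : 'cV[R]_n -> Prop) :=
  exists (m : nat) (A : 'M[R]_(m, n)) (b : 'cV[R]_m),
    forall x, S x <-> leV (A *m x) b.

Definition box_bounded (R : numDomainType) (n : nat) (S : 'cV[R]_n -> Prop) :=
  exists M : R, forall x, S x -> forall i, `|x i 0| <= M.

Definition int_on (R : archiNumDomainType) (n : nat) (I : pred 'I_n)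
  (z : 'cV[R]_n) : Prop := forall i, I i -> z i 0 \is a Num.int.

Definition mixed_integer_set (R : archiNumDomainType) (n : nat)
  (S : 'cV[R]_n -> Prop) :=
  exists (k m : nat) (A : 'M[R]_(m, n + k)) (b : 'cV[R]_m) (I : pred 'I_(n + k)),
    forall x, S x <-> exists w : 'cV[R]_k,
      leV (A *m col_mx x w) b /\ int_on I (col_mx x w).

Definition in_interior (R : numDomainType) (n : nat) (S : 'cV[R]_n -> Prop)
  (z : 'cV[R]_n) : Prop :=
  exists e : R, 0 < e /\
    forall w : 'cV[R]_n, (forall i, `|w i 0 - z i 0| < e) -> S w.

Definition concave_on (R : numDomainType) (n : nat) (D : 'cV[R]_n -> Prop)
  (F : 'cV[R]_n -> R) : Prop :=
  forall x y (l : R), D x -> D y -> 0 <= l -> l <= 1 ->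
    l * F x + (1 - l) * F y <= F (l *: x + (1 - l) *: y).

Definition strictly_concave_on (R : numDomainType) (n : nat)
  (D : 'cV[R]_n -> Prop) (F : 'cV[R]_n -> R) : Prop :=
  forall x y (l : R), D x -> D y -> x != y -> 0 < l -> l < 1 ->
    l * F x + (1 - l) * F y < F (l *: x + (1 - l) *: y).

Definition PSD (R : numDomainType) (n : nat) (Q : 'M[R]_n) : Prop :=
  forall v : 'cV[R]_n, 0 <= (v^T *m Q *m v) 0 0.

Definition minJ (R : realDomainType) (m : nat) (F : 'I_m.+1 -> R) : R :=
  \big[Num.min/F ord0]_(j < m.+1) F j.

Definition cat4 (R : Type) (nx nu nth npi : nat) (x : 'cV[R]_nx) (u : 'cV[R]_nu)
  (th : 'cV[R]_nth) (pi : 'cV[R]_npi) : 'cV[R]_(nx + nu + nth + npi) :=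
  col_mx (col_mx (col_mx x u) th) pi.

Definition f_util (R : realDomainType) (nx nu nth npi : nat)
  (Q : 'M[R]_(nx + nu)) (H : 'M[R]_(nth + npi, nx + nu))
  (K : nat) (m : 'I_K -> nat)
  (F : forall i : 'I_K, 'I_(m i).+1 -> 'rV[R]_(nx + nu + nth + npi))
  (zeta : forall i : 'I_K, 'I_(m i).+1 -> R)
  (x : 'cV[R]_nx) (u : 'cV[R]_nu) (th : 'cV[R]_nth) (pi : 'cV[R]_npi) : R :=
  - ((col_mx x u)^T *m Q *m col_mx x u) 0 0
  + ((col_mx th pi)^T *m H *m col_mx x u) 0 0
  + \sum_(i < K) minJ (fun j => (F i j *m cat4 x u th pi) 0 0 + zeta i j).

Definition noise_density (R : realType) (p : R -> R) : Prop :=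
  measurable_fun setT p /\ (forall x, 0 <= p x) /\
  (\int[lebesgue_measure]_x (p x)%:E = 1)%E /\
  lebesgue_measure.-integrable setT (fun x => (x * p x)%:E) /\
  (\int[lebesgue_measure]_x (x * p x)%:E = 0)%E /\
  (\int[lebesgue_measure]_x (x ^+ 2 * p x)%:E < +oo)%E.

(* density of a vector with i.i.d. components of density p *)
Definition pvec (R : realType) (p : R -> R) (m : nat) (e : 'cV[R]_m) : R :=
  \prod_(k < m) p (e k 0).

(* (A4): log p is expressible using integer linear constraints: its
   hypograph {(e;s) | p e > 0, s <= log p e} is a mixed integer set *)
Definition log_density_milp (R : realType) (p : R -> R) (m : nat) : Prop :=
  mixed_integer_set (fun v : 'cV[R]_(m + 1) =>
    0 < pvec p (usubmx v) /\ dsubmx v 0 0 <= ln (pvec p (usubmx v))).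

(* constraints of the MLE problem on the horizon 0 <= t <= N (states up to N+1) *)
Definition traj_feasible (R : realDomainType) (nx nu nth npi : nat)
  (X : 'cV[R]_nx -> Prop) (U : 'cV[R]_nu -> Prop) (Th : 'cV[R]_nth -> Prop)
  (f : 'cV[R]_nx -> 'cV[R]_nu -> 'cV[R]_nth -> 'cV[R]_npi -> R)
  (h : 'cV[R]_nx -> 'cV[R]_nu -> 'cV[R]_nx)
  (g : 'cV[R]_nx -> 'cV[R]_nu -> 'cV[R]_nth -> 'cV[R]_npi -> 'cV[R]_nth)
  (pi : nat -> 'cV[R]_npi) (N : nat)
  (x : nat -> 'cV[R]_nx) (u : nat -> 'cV[R]_nu) (th : nat -> 'cV[R]_nth) : Prop :=
  (forall t, (t <= N)%N ->
     [/\ U (u t),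
         (forall v, U v ->
            f (h (x t) v) v (th t) (pi t) <= f (h (x t) (u t)) (u t) (th t) (pi t)),
         x t.+1 = h (x t) (u t) &
         th t.+1 = g (x t) (u t) (th t) (pi t)]) /\
  (forall t, (t <= N.+1)%N -> X (x t) /\ Th (th t)).

Definition loglik (R : realType) (nx nu mx my nxo nuo : nat)
  (pnu pom : R -> R) (D : 'M[R]_(mx, nx)) (C : 'M[R]_(my, nu))
  (tx : 'I_nxo.+1 -> nat) (xo : 'I_nxo.+1 -> 'cV[R]_mx)
  (tau : 'I_nuo.+1 -> nat) (yo : 'I_nuo.+1 -> 'cV[R]_my)
  (x : nat -> 'cV[R]_nx) (u : nat -> 'cV[R]_nu) : R :=
  \sum_(i < nxo.+1) ln (pvec pnu (xo i - D *m x (tx i)))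
  + \sum_(j < nuo.+1) ln (pvec pom (yo j - C *m u (tau j))).

(* the likelihood is positive (log-likelihood finite) *)
Definition lik_pos (R : realType) (nx nu mx my nxo nuo : nat)
  (pnu pom : R -> R) (D : 'M[R]_(mx, nx)) (C : 'M[R]_(my, nu))
  (tx : 'I_nxo.+1 -> nat) (xo : 'I_nxo.+1 -> 'cV[R]_mx)
  (tau : 'I_nuo.+1 -> nat) (yo : 'I_nuo.+1 -> 'cV[R]_my)
  (x : nat -> 'cV[R]_nx) (u : nat -> 'cV[R]_nu) : Prop :=
  (forall i, 0 < pvec pnu (xo i - D *m x (tx i))) /\
  (forall j, 0 < pvec pom (yo j - C *m u (tau j))).

(* The problem  max Obj(x,u,th) s.t. Feas(x,u,th) [and Pos(x,u,th), i.e.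
   Obj > -oo] over trajectories on the horizon (states t <= N+1, decisions
   t <= N) can be expressed as a mixed integer linear program
   max c^T z s.t. A z <= b, z_i integer for i in I, whose decision vector z
   determines the trajectory linearly (z contains it, plus auxiliary
   variables): every MILP-feasible z yields a feasible trajectory whose
   objective is >= c^T z, and every feasible trajectory is obtained from
   some MILP-feasible z with c^T z equal to its objective. *)
Definition milp_expressible (R : realType) (nx nu nth : nat) (N : nat)
  (Feas Pos : (nat -> 'cV[R]_nx) -> (nat -> 'cV[R]_nu) -> (nat -> 'cV[R]_nth) -> Prop)
  (Obj : (nat -> 'cV[R]_nx) -> (nat -> 'cV[R]_nu) -> (nat -> 'cV[R]_nth) -> R) : Prop :=
  exists (M Kc : nat) (A : 'M[R]_(Kc, M)) (b : 'cV[R]_Kc) (c : 'cV[R]_M)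
         (I : pred 'I_M) (Sx : nat -> 'M[R]_(nx, M)) (Su : nat -> 'M[R]_(nu, M))
         (Sth : nat -> 'M[R]_(nth, M)),
    (forall z, leV (A *m z) b -> int_on I z ->
       let x := fun t => Sx t *m z in
       let u := fun t => Su t *m z in
       let th := fun t => Sth t *m z in
       [/\ Feas x u th, Pos x u th & (c^T *m z) 0 0 <= Obj x u th]) /\
    (forall x u th, Feas x u th -> Pos x u th ->
       exists z, [/\ leV (A *m z) b, int_on I z,
         (forall t, (t <= N.+1)%N -> Sx t *m z = x t /\ Sth t *m z = th t),
         (forall t, (t <= N)%N -> Su t *m z = u t) &
         (c^T *m z) 0 0 = Obj x u th]).

(* Main.v *)
Require Import Defs.
From HB Require Import structures.
From mathcomp Require Import all_boot all_order all_algebra.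
From mathcomp Require Import all_classical all_reals all_analysis.
From mathcomp Require Import ring lra.
Import Order.TTheory GRing.Theory Num.Theory.
Local Open Scope ring_scope.

Set Implicit Arguments.
Unset Strict Implicit.
Unset Printing Implicit Defensive.


Section Farkas.
Variable R : realFieldType.

Definition dotv (V : finType) (a d : V -> R) := \sum_j a j * d j.

Lemma dotvC (V : finType) (a d : V -> R) : dotv a d = dotv d a.
Proof. by apply: eq_bigr => j _; rewrite mulrC. Qed.

Lemma dotv_lcomb (V : finType) (x y : R) (a b d : V -> R) :
  dotv (fun j => x * a j + y * b j) d = x * dotv a d + y * dotv b d.
Proof.
rewrite /dotv !mulr_sumr -big_split /=; apply: eq_bigr => j _.
by rewrite mulrDl !mulrA.
Qed.

Lemma dotv_rcomb (V : finType) (x y : R) (a b d : V -> R) :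
  dotv d (fun j => x * a j + y * b j) = x * dotv d a + y * dotv d b.
Proof. by rewrite dotvC dotv_lcomb !(dotvC d). Qed.

Lemma dotv_ext (V : finType) (a a' d d' : V -> R) :
  a =1 a' -> d =1 d' -> dotv a d = dotv a' d'.
Proof. by move=> ha hd; apply: eq_bigr => j _; rewrite ha hd. Qed.

Lemma dotv0l (V : finType) (d : V -> R) : dotv (fun _ => 0) d = 0.
Proof. by rewrite /dotv big1 // => j _; rewrite mul0r. Qed.

Fixpoint incone (V : finType) (s : seq (V -> R)) (c : V -> R) : Prop :=
  match s with
  | [::] => forall j, c j = 0
  | a :: s' => exists mu, 0 <= mu /\ incone s' (fun j => c j - mu * a j)
  end.

Fixpoint alln (V : finType) (P : (V -> R) -> Prop) (s : seq (V -> R)) : Prop :=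
  match s with [::] => True | a :: s' => P a /\ alln P s' end.

Lemma incone_ext (V : finType) s (c c' : V -> R) :
  c =1 c' -> incone s c -> incone s c'.
Proof.
elim: s c c' => [|a s IH] c c' e /=; first by move=> h j; rewrite -e.
case=> mu [mu0 h]; exists mu; split=> //; apply: IH h => j; by rewrite e.
Qed.

Lemma incone_dot (V : finType) s (w d : V -> R) :
  alln (fun a => dotv a d <= 0) s -> incone s w -> dotv w d <= 0.
Proof.
elim: s w => [|a s IH] w /=.
  by move=> _ h; rewrite /dotv big1 // => j _; rewrite h mul0r.
case=> had hs [mu [mu0 hc]].
have := IH _ hs hc.
have -> : dotv (fun j => w j - mu * a j) d = 1 * dotv w d + (- mu) * dotv a d.
  rewrite -dotv_lcomb; apply: dotv_ext => // j; by rewrite mul1r mulNr.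
rewrite mul1r mulNr subr_le0 => h; apply: (le_trans h).
by rewrite mulr_ge0_le0.
Qed.

Lemma incone_map (V : finType) (p : R) (a d : V -> R) s c' :
  incone (map (fun a' => fun j => p * a' j - dotv a' d * a j) s) c' ->
  exists w, incone s w /\ forall j, c' j = p * w j - dotv w d * a j.
Proof.
elim: s c' => [|b s IH] c' /=.
  move=> h; exists (fun _ => 0); split=> // j; by rewrite h dotv0l !mulr0 mul0r subr0.
case=> mu [mu0 /IH [w' [hw' e]]].
exists (fun j => w' j + mu * b j); split.
  exists mu; split=> //; apply: incone_ext hw' => j; by rewrite addrK.
move=> j.
have -> : dotv (fun j => w' j + mu * b j) d = 1 * dotv w' d + mu * dotv b d.
  rewrite -dotv_lcomb; apply: dotv_ext => // i; by rewrite mul1r.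
have := e j; rewrite mul1r => e'.
have -> : c' j = (c' j - mu * (p * b j - dotv b d * a j)) + mu * (p * b j - dotv b d * a j) by rewrite subrK.
rewrite e'; ring.
Qed.

Lemma farkas_seq (V : finType) n (s : seq (V -> R)) (c : V -> R) :
  size s = n -> ~ incone s c ->
  exists d, alln (fun a => dotv a d <= 0) s /\ 0 < dotv c d.
Proof.
elim: n s c => [|n IH] [|a s] c //= hs.
  move=> nc; have [j cj] : exists j, c j != 0.
    case: (pselect (exists j, c j != 0)) => // h; exfalso; apply: nc => j.
    by apply/eqP; apply/negPn/negP => hj; apply: h; exists j.
  exists c; split=> //; rewrite /dotv (bigD1 j) //=.
  apply: (@lt_le_trans _ _ (c j * c j)); first by rewrite -expr2 exprn_even_gt0.
  rewrite lerDl sumr_ge0 // => i _; by rewrite -expr2 sqr_ge0.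
case: hs => hs nc.
have [d [hd cd]] : exists d, alln (fun a => dotv a d <= 0) s /\ 0 < dotv c d.
  apply: (IH s c hs) => h; apply: nc; exists 0; split=> //.
  by apply: incone_ext h => j; rewrite mul0r subr0.
case: (lerP (dotv a d) 0) => ad; first by exists d.
set p := dotv a d.
pose b := fun a' : V -> R => fun j => p * a' j - dotv a' d * a j.
pose c' := fun j => p * c j - dotv c d * a j.
have nc' : ~ incone (map b s) c'.
  move/incone_map => [w [hw e]]; apply: nc.
  have wd := incone_dot hd hw.
  exists ((dotv c d - dotv w d) / p); split.
    by rewrite divr_ge0 // ?subr_ge0 ?(le_trans wd) // ltW.
  apply: incone_ext hw => j.
  have := e j; rewrite /c' => e'.
  have p0 : p != 0 by rewrite gt_eqF.
  apply: (mulfI p0).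
  have -> : p * w j = (p * c j - dotv c d * a j) + dotv w d * a j by rewrite e' subrK.
  by field.
have hsb : size (map b s) = n by rewrite size_map.
have [d' [hd' cd']] := IH (map b s) c' hsb nc'.
pose d'' := fun j => 1 * d' j + (- (dotv a d' / p)) * d j.
have p0 : p != 0 by rewrite gt_eqF.
have ad'' : dotv a d'' = 0.
  rewrite dotv_rcomb -/p; field; exact: p0.
have key : forall a', p * dotv a' d'' = dotv (b a') d'.
  move=> a'.
  have -> : dotv (b a') d' = p * dotv a' d' - dotv a' d * dotv a d'.
    rewrite /b (dotv_ext (a' := fun j => p * a' j + (- dotv a' d) * a j) (d' := d')) //.
      by rewrite dotv_lcomb mulNr.
    by move=> j; rewrite mulNr.
  rewrite dotv_rcomb mul1r /p; field; exact: p0.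
exists d''; split.
  rewrite /= ad'' lexx; split=> //.
  clear hsb; elim: s hd' {hs nc hd IH nc'} => [|a1 s IH2] //= [h1 h2]; split; last exact: IH2.
  rewrite -(pmulr_rle0 _ ad) key; exact: h1.
rewrite -(pmulr_rgt0 _ ad) key; exact: cd'.
Qed.

Lemma alln_map (K V : finType) (P : (V -> R) -> Prop) (al : K -> V -> R) r :
  alln P (map al r) -> forall k, k \in r -> P (al k).
Proof.
elim: r => [|k r IH] //= [h1 h2] k'; rewrite in_cons => /orP [/eqP -> //|].
exact: IH.
Qed.

Lemma incone_coef (K V : finType) (al : K -> V -> R) r c :
  uniq r -> incone (map al r) c ->
  exists mu : K -> R, (forall k, 0 <= mu k) /\
    forall j, c j = \sum_(k <- r) mu k * al k j.
Proof.
elim: r c => [|k r IH] c /=.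
  move=> _ h; exists (fun _ => 0); split=> // j; by rewrite big_nil h.
case/andP=> kr ur [m [m0 /(IH _ ur) [mu [mu0 e]]]].
exists (fun k' => if k' == k then m else mu k'); split.
  by move=> k'; case: (k' == k).
move=> j; rewrite big_cons eqxx.
rewrite (eq_big_seq (fun k' => mu k' * al k' j)).
  by rewrite -e addrC subrK.
move=> k' hk'; case: eqP => // ek; by rewrite -ek hk' in kr.
Qed.

Lemma farkas_fin (K V : finType) (al : K -> V -> R) (c : V -> R) :
  (forall d, (forall k, dotv (al k) d <= 0) -> dotv c d <= 0) ->
  exists mu : K -> R, (forall k, 0 <= mu k) /\
    forall j, c j = \sum_k mu k * al k j.
Proof.
move=> H.
case: (pselect (incone (map al (index_enum K)) c)) => hc.
  exact: (incone_coef (index_enum_uniq K) hc).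
have [d [hd cd]] := farkas_seq (erefl _) hc.
have : dotv c d <= 0.
  apply: H => k; apply: (alln_map hd); exact: mem_index_enum.
by rewrite leNgt cd.
Qed.

End Farkas.

Section KKT.
Variable R : realFieldType.
Variables (Y Rw : finType) (Phi : (Y -> R) -> R) (G : (Y -> R) -> Y -> R)
  (C : (Y -> R) -> R) (g : Rw -> (Y -> R) -> R) (a : Rw -> Y -> R).
Hypothesis Hexp : forall y d t,
  Phi (fun j => y j + t * d j) = Phi y + t * dotv (G y) d - t ^+ 2 * C d.
Hypothesis HC : forall d, 0 <= C d.
Hypothesis Hg : forall r y d, g r (fun j => y j + d j) = g r y + dotv (a r) d.

Definition kfeas y := forall r, g r y <= 0.

Lemma Phi_diff y0 y :
  Phi y = Phi y0 + dotv (G y0) (fun j => y j - y0 j) - C (fun j => y j - y0 j).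
Proof.
rewrite -[C _]mul1r -(expr1n _ 2) -[dotv _ _]mul1r -Hexp; congr Phi.
by apply: funext => j; rewrite mul1r addrC subrK.
Qed.

Lemma g_diff r y0 y : g r y = g r y0 + dotv (a r) (fun j => y j - y0 j).
Proof. rewrite -Hg; congr g; by apply: funext => j; rewrite addrC subrK. Qed.

Lemma kkt_suff y0 (lam : Rw -> R) :
  (forall r, 0 <= lam r) -> (forall r, lam r * g r y0 = 0) ->
  (forall j, G y0 j = \sum_r lam r * a r j) ->
  forall y, kfeas y -> Phi y <= Phi y0.
Proof.
move=> l0 comp st y fy; rewrite (Phi_diff y0 y).
set d := fun j => y j - y0 j.
have -> : dotv (G y0) d = \sum_r lam r * g r y.
  rewrite /dotv (eq_bigr (fun j => \sum_r lam r * a r j * d j)); last first.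
    by move=> j _; rewrite st mulr_suml.
  rewrite exchange_big /=; apply: eq_bigr => r _.
  under eq_bigr do rewrite -mulrA.
  rewrite -mulr_sumr; change (lam r * dotv (a r) d = lam r * g r y).
  have -> : dotv (a r) d = g r y - g r y0 by rewrite (g_diff r y0 y) addrC addKr.
  by rewrite mulrBr comp subr0.
rewrite -addrA gerDl subr_le0 (le_trans _ (HC d)) //.
by rewrite sumr_le0 // => r _; rewrite mulr_ge0_le0.
Qed.

Lemma kkt_lin y0 : kfeas y0 -> (forall y, kfeas y -> Phi y <= Phi y0) ->
  forall y, kfeas y -> dotv (G y0) (fun j => y j - y0 j) <= 0.
Proof.
move=> f0 opt y fy; set d := fun j => y j - y0 j.
have ft : forall t, 0 <= t <= 1 -> kfeas (fun j => y0 j + t * d j).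
  move=> t /andP [t0 t1] r.
  have -> : g r (fun j => y0 j + t * d j) = (1 - t) * g r y0 + t * g r y.
    rewrite Hg (g_diff r y0 y) -/d.
    have -> : dotv (a r) (fun j => t * d j) = t * dotv (a r) d.
      by rewrite /dotv mulr_sumr; apply: eq_bigr => j _; rewrite mulrCA.
    ring.
  have h1 := f0 r; have h2 := fy r; nra.
have key : forall t, 0 < t <= 1 -> dotv (G y0) d <= t * C d.
  move=> t /andP [t0 t1].
  have ft' : kfeas (fun j => y0 j + t * d j) by apply: ft; rewrite t1 ltW.
  have := opt _ ft'; rewrite Hexp expr2 => h.
  set u := dotv (G y0) d in h *; set v := C d in h *; nra.
case: (lerP (dotv (G y0) d) 0) => // gd.
pose t := dotv (G y0) d / (dotv (G y0) d + C d).
have den : 0 < dotv (G y0) d + C d by rewrite ltr_wpDr.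
have t0 : 0 < t by rewrite divr_gt0.
have t1 : t <= 1 by rewrite ler_pdivrMr // mul1r lerDl.
have := key t; rewrite t0 t1 => /(_ isT) h.
have e : t * (dotv (G y0) d + C d) = dotv (G y0) d.
  by rewrite /t mulrC mulrA mulrC mulrA mulVf ?mul1r // gt_eqF.
set u := dotv (G y0) d in h e gd den t0 t1 *; set v := C d in h e den *.
nra.
Qed.


Lemma dotv_sum1 (f d : Y + 'I_1 -> R) :
  dotv f d = \sum_j f (inl j) * d (inl j) + f (inr ord0) * d (inr ord0).
Proof. by rewrite /dotv big_sumType big_ord1. Qed.

Lemma dotvZr (b d : Y -> R) s : dotv b (fun j => d j / s) = dotv b d / s.
Proof. by rewrite /dotv mulr_suml; apply: eq_bigr => j _; rewrite mulrA. Qed.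

Lemma dotvBr (b d e : Y -> R) : dotv b (fun j => d j - e j) = dotv b d - dotv b e.
Proof. by rewrite /dotv -sumrB; apply: eq_bigr => j _; rewrite mulrBr. Qed.

Lemma kkt_nec y0 : kfeas y0 -> (forall y, kfeas y -> Phi y <= Phi y0) ->
  exists lam : Rw -> R, [/\ forall r, 0 <= lam r,
    forall r, lam r * g r y0 = 0 &
    forall j, G y0 j = \sum_r lam r * a r j].
Proof.
move=> f0 opt; have lin := kkt_lin f0 opt.
pose e r := dotv (a r) y0 - g r y0.
pose al := fun (k : Rw + 'I_1) (j' : Y + 'I_1) =>
  match k with
  | inl r => match j' with inl j => a r j | inr _ => e r end
  | inr _ => match j' with inl _ => 0 | inr _ => 1 end
  end.
pose c := fun j' : Y + 'I_1 => match j' with inl j => G y0 j | inr _ => dotv (G y0) y0 end.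
have H : forall d', (forall k, dotv (al k) d' <= 0) -> dotv c d' <= 0.
  move=> d' hk; set tau := d' (inr ord0); set d := fun j => d' (inl j).
  have htau : tau <= 0.
    have := hk (inr ord0); rewrite dotv_sum1 /= big1 ?add0r ?mul1r // => j _.
    by rewrite mul0r.
  have hr : forall r, dotv (a r) d + e r * tau <= 0.
    by move=> r; have := hk (inl r); rewrite dotv_sum1.
  rewrite dotv_sum1 /= -/tau; change (dotv (G y0) d + dotv (G y0) y0 * tau <= 0).
  case: (ltrgtP tau 0) => [tn|tp|t0]; last first.
  - rewrite t0 mulr0 addr0.
    have fy : kfeas (fun j => y0 j + d j).
      move=> r; rewrite Hg; have := hr r; rewrite t0 mulr0 addr0 => h.
      have := f0 r => h'; exact: (le_trans (lerD h' h)); rewrite addr0.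
    have := lin _ fy.
    by rewrite (dotv_ext (a' := G y0) (d' := d)) // => j; rewrite addrC addKr.
  - by move: htau; rewrite leNgt tp.
  - pose y := fun j => d j / - tau.
    have nt : 0 < - tau by rewrite oppr_gt0.
    have fy : kfeas y.
      move=> r; rewrite (g_diff r y0 y) dotvBr dotvZr.
      have := hr r; rewrite /e => h.
      have -> : g r y0 + (dotv (a r) d / - tau - dotv (a r) y0) =
                (dotv (a r) d + (dotv (a r) y0 - g r y0) * tau) / - tau.
        by field; rewrite ?oppr_eq0 lt_eqF.
      by rewrite pmulr_lle0 // invr_gt0.
    have := lin _ fy; rewrite dotvBr dotvZr => h.
    have : (dotv (G y0) d / - tau - dotv (G y0) y0) * - tau <= 0.
      by rewrite pmulr_lle0.
    have -> : (dotv (G y0) d / - tau - dotv (G y0) y0) * - tau =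
              dotv (G y0) d + dotv (G y0) y0 * tau.
      by field; rewrite ?oppr_eq0 lt_eqF.
    by [].
have [mu [mu0 hmu]] := farkas_fin H.
exists (fun r => mu (inl r)).
have st : forall j, G y0 j = \sum_r mu (inl r) * a r j.
  move=> j; have := hmu (inl j); rewrite big_sumType big_ord1 /= mulr0 addr0.
  by [].
have hN : dotv (G y0) y0 = \sum_r mu (inl r) * e r + mu (inr ord0).
  by have := hmu (inr ord0); rewrite big_sumType big_ord1 /= mulr1.
have S0 : \sum_r mu (inl r) * (- g r y0) = 0.
  apply/eqP; rewrite eq_le; apply/andP; split; last first.
    by rewrite sumr_ge0 // => r _; rewrite mulr_ge0 // oppr_ge0 f0.
  have -> : \sum_r mu (inl r) * - g r y0 =
            \sum_r mu (inl r) * e r - dotv (G y0) y0.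
    rewrite /dotv (eq_bigr (fun j => \sum_r mu (inl r) * a r j * y0 j)); last first.
      by move=> j _; rewrite st mulr_suml.
    rewrite exchange_big /= -sumrB; apply: eq_bigr => r _.
    under [X in _ = _ - X]eq_bigr do rewrite -mulrA.
    by rewrite -mulr_sumr /e mulrBr addrAC subrr add0r mulrN.
  by rewrite hN opprD addrA subrr add0r oppr_le0.
split=> // r.
have hp : forall i : Rw, predT i -> 0 <= mu (inl i) * - g i y0.
  by move=> i _; rewrite mulr_ge0 // oppr_ge0 f0.
have := psumr_eq0P hp S0 (i := r) isT.
by move/eqP; rewrite mulrN oppr_eq0 => /eqP.
Qed.

End KKT.


Section Aff.
Variable R : realType.

Definition join (V W : finType) (T : Type) (z : V -> T) (w : W -> T) : V + W -> T :=
  fun j => match j with inl v => z v | inr x => w x end.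

Definition aff (Z : finType) (F : (Z -> R) -> R) :=
  exists (c : Z -> R) (c0 : R), forall x, F x = \sum_j c j * x j + c0.

Lemma sum_delta (Z : finType) (j : Z) (x : Z -> R) :
  \sum_i (i == j)%:R * x i = x j.
Proof.
rewrite (bigD1 j) //= eqxx mul1r big1 ?addr0 // => i /negbTE ->.
by rewrite mul0r.
Qed.

Lemma aff_ext (Z : finType) (F G : (Z -> R) -> R) :
  (forall x, F x = G x) -> aff F -> aff G.
Proof. by move=> e [c [c0 h]]; exists c, c0 => x; rewrite -e. Qed.

Lemma aff_cst (Z : finType) (k : R) : aff (fun _ : Z -> R => k).
Proof. by exists (fun _ => 0), k => x; rewrite big1 ?add0r // => j _; rewrite mul0r. Qed.

Lemma aff_var (Z : finType) (j : Z) : aff (fun x : Z -> R => x j).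
Proof. by exists (fun i => (i == j)%:R), 0 => x; rewrite addr0 sum_delta. Qed.

Lemma aff_add (Z : finType) (F G : (Z -> R) -> R) :
  aff F -> aff G -> aff (fun x => F x + G x).
Proof.
move=> [c [c0 hF]] [d [d0 hG]]; exists (fun j => c j + d j), (c0 + d0) => x.
have -> : \sum_j (c j + d j) * x j = \sum_j c j * x j + \sum_j d j * x j.
  by rewrite -big_split; apply: eq_bigr => j _; rewrite mulrDl.
rewrite hF hG; ring.
Qed.

Lemma aff_scale (Z : finType) (k : R) (F : (Z -> R) -> R) :
  aff F -> aff (fun x => k * F x).
Proof.
move=> [c [c0 hF]]; exists (fun j => k * c j), (k * c0) => x.
by rewrite hF mulrDr mulr_sumr; congr (_ + _); apply: eq_bigr => j _; rewrite mulrA.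
Qed.

Lemma aff_opp (Z : finType) (F : (Z -> R) -> R) : aff F -> aff (fun x => - F x).
Proof. move=> h; apply: aff_ext (aff_scale (-1) h) => x; by rewrite mulN1r. Qed.

Lemma aff_sub (Z : finType) (F G : (Z -> R) -> R) :
  aff F -> aff G -> aff (fun x => F x - G x).
Proof. by move=> hF hG; apply: aff_add hF (aff_opp hG). Qed.

Lemma aff_mulr (Z : finType) (k : R) (F : (Z -> R) -> R) :
  aff F -> aff (fun x => F x * k).
Proof. move=> h; apply: aff_ext (aff_scale k h) => x; by rewrite mulrC. Qed.

Lemma aff_sum (Z I : finType) (P : pred I) (F : I -> (Z -> R) -> R) :
  (forall i, aff (F i)) -> aff (fun x => \sum_(i | P i) F i x).
Proof.
move=> h; have [c hc] := choice h.
have [c0 hc0] := choice hc.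
exists (fun j => \sum_(i | P i) c i j), (\sum_(i | P i) c0 i) => x.
rewrite (eq_bigr (fun i => \sum_j c i j * x j + c0 i)); last by move=> i _; rewrite hc0.
rewrite big_split /=; congr (_ + _).
rewrite exchange_big /=; apply: eq_bigr => j _; by rewrite mulr_suml.
Qed.

Lemma aff_comp (Z Z' : finType) (F : (Z' -> R) -> R) (G : Z' -> (Z -> R) -> R) :
  aff F -> (forall v, aff (G v)) -> aff (fun x => F (fun v => G v x)).
Proof.
move=> [c [c0 hF]] hG.
apply: aff_ext (aff_add (aff_sum predT (fun v => aff_scale (c v) (hG v))) (aff_cst _ c0)).
by move=> x; rewrite hF.
Qed.

Lemma aff_bound (Z : finType) (F : (Z -> R) -> R) :
  aff F -> forall M, exists B, forall x, (forall j, `|x j| <= M) -> `|F x| <= B.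
Proof.
move=> [c [c0 hF]] M; exists (\sum_j `|c j| * M + `|c0|) => x hx.
rewrite hF (le_trans (ler_normD _ _)) // lerD2r (le_trans (ler_norm_sum _ _ _)) //.
apply: ler_sum => j _; rewrite normrM ler_wpM2l //.
Qed.

Definition quad (Z : finType) (F : (Z -> R) -> R) :=
  exists (M : Z -> Z -> R) (l : Z -> R) (c0 : R), forall x,
    F x = \sum_j \sum_k M j k * x j * x k + \sum_j l j * x j + c0.

Lemma quad_ext (Z : finType) (F G : (Z -> R) -> R) :
  (forall x, F x = G x) -> quad F -> quad G.
Proof. by move=> e [M [l [c0 h]]]; exists M, l, c0 => x; rewrite -e. Qed.

Lemma aff_quad (Z : finType) (F : (Z -> R) -> R) : aff F -> quad F.
Proof.
move=> [c [c0 h]]; exists (fun _ _ => 0), c, c0 => x.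
have -> : \sum_j \sum_k (fun _ _ => 0 : R) j k * x j * x k = 0.
  by rewrite big1 // => j _; rewrite big1 // => k _; rewrite !mul0r.
by rewrite h add0r.
Qed.

Lemma quad_add (Z : finType) (F G : (Z -> R) -> R) :
  quad F -> quad G -> quad (fun x => F x + G x).
Proof.
move=> [M [l [c0 hF]]] [N [m [d0 hG]]].
exists (fun j k => M j k + N j k), (fun j => l j + m j), (c0 + d0) => x.
rewrite hF hG.
have -> : \sum_j \sum_k (M j k + N j k) * x j * x k =
  \sum_j \sum_k M j k * x j * x k + \sum_j \sum_k N j k * x j * x k.
  rewrite -big_split; apply: eq_bigr => j _; rewrite -big_split.
  by apply: eq_bigr => k _; rewrite /= !mulrDl.
have -> : \sum_j (l j + m j) * x j = \sum_j l j * x j + \sum_j m j * x j.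
  by rewrite -big_split; apply: eq_bigr => j _; rewrite mulrDl.
ring.
Qed.

Lemma quad_scale (Z : finType) (a : R) (F : (Z -> R) -> R) :
  quad F -> quad (fun x => a * F x).
Proof.
move=> [M [l [c0 hF]]]; exists (fun j k => a * M j k), (fun j => a * l j), (a * c0).
move=> x; rewrite hF !mulrDr !mulr_sumr; congr (_ + _ + _).
  apply: eq_bigr => j _; rewrite mulr_sumr; apply: eq_bigr => k _; by rewrite !mulrA.
apply: eq_bigr => j _; by rewrite mulrA.
Qed.

Lemma quad_sum (Z I : finType) (P : pred I) (F : I -> (Z -> R) -> R) :
  (forall i, quad (F i)) -> quad (fun x => \sum_(i | P i) F i x).
Proof.
move=> h.
have : forall s : seq I, quad (fun x => \sum_(i <- s | P i) F i x).
  elim=> [|i s IH].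
    apply: quad_ext (aff_quad (aff_cst _ 0)) => x; by rewrite big_nil.
  case Pi: (P i).
    apply: quad_ext (quad_add (h i) IH) => x; by rewrite big_cons Pi.
  apply: quad_ext IH => x; by rewrite big_cons Pi.
by move/(_ (index_enum I)).
Qed.

Lemma quad_mul (Z : finType) (F G : (Z -> R) -> R) :
  aff F -> aff G -> quad (fun x => F x * G x).
Proof.
move=> [c [c0 hF]] [d [d0 hG]].
exists (fun j k => c j * d k), (fun j => c0 * d j + d0 * c j), (c0 * d0) => x.
rewrite hF hG.
have -> : \sum_j \sum_k c j * d k * x j * x k = (\sum_j c j * x j) * (\sum_j d j * x j).
  rewrite mulr_suml; apply: eq_bigr => j _; rewrite mulr_sumr.
  apply: eq_bigr => k _ /=; ring.
have -> : \sum_j (c0 * d j + d0 * c j) * x j =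
   c0 * \sum_j d j * x j + d0 * \sum_j c j * x j.
  rewrite !mulr_sumr -big_split; apply: eq_bigr => j _ /=; ring.
ring.
Qed.

Lemma quad_expand (Z : finType) (F : (Z -> R) -> R) : quad F ->
  exists (G : (Z -> R) -> Z -> R) (F2 : (Z -> R) -> R),
    (forall j, aff (fun x => G x j)) /\
    forall x d t, F (fun j => x j + t * d j) = F x + t * dotv (G x) d + t ^+ 2 * F2 d.
Proof.
move=> [M [l [c0 hF]]].
exists (fun x j => \sum_k (M k j + M j k) * x k + l j).
exists (fun d => \sum_j \sum_k M j k * d j * d k); split.
  move=> j; apply: aff_add; last exact: aff_cst.
  apply: aff_sum => k; apply: aff_scale; exact: aff_var.
move=> x d t; rewrite !hF.
have e1 : forall j k, M j k * (x j + t * d j) * (x k + t * d k) =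
  M j k * x j * x k + t * (M j k * x j * d k + M j k * d j * x k) + t ^+ 2 * (M j k * d j * d k).
  by move=> j k; ring.
under eq_bigr do under eq_bigr do rewrite e1.
have -> : \sum_j \sum_k (M j k * x j * x k + t * (M j k * x j * d k + M j k * d j * x k) +
      t ^+ 2 * (M j k * d j * d k)) =
  \sum_j \sum_k M j k * x j * x k +
  t * (\sum_j \sum_k (M j k * x j * d k + M j k * d j * x k)) +
  t ^+ 2 * \sum_j \sum_k M j k * d j * d k.
  rewrite !mulr_sumr -!big_split; apply: eq_bigr => j _.
  rewrite !mulr_sumr -!big_split; apply: eq_bigr => k _ //.
have -> : \sum_j l j * (x j + t * d j) = \sum_j l j * x j + t * \sum_j l j * d j.
  rewrite mulr_sumr -big_split; apply: eq_bigr => j _ /=; ring.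
have -> : dotv (fun j => \sum_k (M k j + M j k) * x k + l j) d =
   \sum_j \sum_k (M j k * x j * d k + M j k * d j * x k) + \sum_j l j * d j.
  rewrite /dotv.
  have -> : \sum_j (\sum_k (M k j + M j k) * x k + l j) * d j =
    \sum_j \sum_k (M k j * x k * d j) + \sum_j \sum_k (M j k * x k * d j) + \sum_j l j * d j.
    rewrite -!big_split; apply: eq_bigr => j _ /=; rewrite mulrDl mulr_suml.
    rewrite -big_split /=; congr (_ + _); apply: eq_bigr => k _ /=; ring.
  congr (_ + _).
  rewrite [RHS](eq_bigr (fun j => \sum_k M j k * x j * d k + \sum_k M j k * d j * x k));
    last by move=> j _; rewrite big_split.
  rewrite big_split /=; congr (_ + _).
    by rewrite exchange_big.
  apply: eq_bigr => j _; apply: eq_bigr => k _ /=; ring.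
ring.
Qed.

End Aff.


Section Mirep.
Variable R : realType.

Definition mirep (V : finType) (S : (V -> R) -> Prop) :=
  exists (Z Rw : finType) (emb : V -> Z) (a : Rw -> Z -> R) (b : Rw -> R) (I : pred Z),
    forall z, S z <-> exists x : Z -> R,
      [/\ forall v, x (emb v) = z v, forall r, \sum_j a r j * x j <= b r &
          forall j, I j -> x j \is a Num.int].

Definition affsys (V Z Rw : finType) (emb : V -> Z) (L : Rw -> (Z -> R) -> R)
  (I : pred Z) (z : V -> R) :=
  exists x : Z -> R, [/\ forall v, x (emb v) = z v, forall r, L r x <= 0 &
          forall j, I j -> x j \is a Num.int].

Lemma mirep_aff (V Z Rw : finType) (emb : V -> Z) (L : Rw -> (Z -> R) -> R)
  (I : pred Z) (S : (V -> R) -> Prop) :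
  (forall r, aff (L r)) -> (forall z, S z <-> affsys emb L I z) -> mirep S.
Proof.
move=> ha hS; have [c hc] := choice ha; have [c0 hc0] := choice hc.
exists Z, Rw, emb, c, (fun r => - c0 r), I => z; rewrite hS.
split=> -[x [h1 h2 h3]]; exists x; split=> // r.
  by have := h2 r; rewrite hc0 => H; lra.
by have := h2 r; rewrite hc0 => H; lra.
Qed.

Lemma mirep_elim (V : finType) (S : (V -> R) -> Prop) : mirep S ->
  exists (Z Rw : finType) (emb : V -> Z) (L : Rw -> (Z -> R) -> R) (I : pred Z),
    (forall r, aff (L r)) /\ forall z, S z <-> affsys emb L I z.
Proof.
move=> [Z [Rw [emb [a [b [I h]]]]]].
exists Z, Rw, emb, (fun r x => \sum_j a r j * x j - b r), I; split.
  move=> r; exists (a r), (- b r) => x //.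
move=> z; rewrite h; split=> -[x [h1 h2 h3]]; exists x; split=> // r.
  by rewrite subr_le0.
by rewrite -subr_le0.
Qed.

Lemma mirep_ext (V : finType) (S S' : (V -> R) -> Prop) :
  mirep S -> (forall z, S z <-> S' z) -> mirep S'.
Proof.
move=> [Z [Rw [emb [a [b [I h]]]]]] e; exists Z, Rw, emb, a, b, I => z.
by rewrite -e.
Qed.

Lemma mirep_poly (V Rw : finType) (L : Rw -> (V -> R) -> R) :
  (forall r, aff (L r)) -> mirep (fun z => forall r, L r z <= 0).
Proof.
move=> ha; apply: (mirep_aff (emb := id) (L := L) (I := pred0)) => // z; split.
  by move=> h; exists z.
by move=> [x [h1 h2 _]]; have -> : z = x by apply: funext => v; rewrite -h1.
Qed.

Lemma mirep_true (V : finType) : mirep (fun _ : V -> R => True).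
Proof.
apply: mirep_ext; first by apply: (mirep_poly (L := fun (_ : void) (_ : V -> R) => 0)); case.
by move=> z; split=> // _ [].
Qed.

Lemma mirep_and (V : finType) (S1 S2 : (V -> R) -> Prop) :
  mirep S1 -> mirep S2 -> mirep (fun z => S1 z /\ S2 z).
Proof.
move=> /mirep_elim [Z1 [Rw1 [e1 [L1 [I1 [a1 h1]]]]]].
move=> /mirep_elim [Z2 [Rw2 [e2 [L2 [I2 [a2 h2]]]]]].
pose L := fun (r : (Rw1 + Rw2) + (V * bool)) (x : Z1 + Z2 -> R) =>
  match r with
  | inl (inl r1) => L1 r1 (fun j => x (inl j))
  | inl (inr r2) => L2 r2 (fun j => x (inr j))
  | inr (v, true) => x (inr (e2 v)) - x (inl (e1 v))
  | inr (v, false) => x (inl (e1 v)) - x (inr (e2 v))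
  end.
pose I := fun j : Z1 + Z2 => match j with inl j => I1 j | inr j => I2 j end.
apply: (mirep_aff (emb := fun v => inl (e1 v)) (L := L) (I := I)).
  case=> [[r|r]|[v []]] /=.
  - by apply: aff_comp (a1 r) _ => j; exact: aff_var.
  - by apply: aff_comp (a2 r) _ => j; exact: aff_var.
  - apply: aff_sub; exact: aff_var.
  - apply: aff_sub; exact: aff_var.
move=> z; rewrite h1 h2; split.
  move=> [[x1 [p1 q1 r1]] [x2 [p2 q2 r2]]].
  exists (join x1 x2); split=> //.
  - case=> [[r|r]|[v []]] /=.
    + by have := q1 r; congr (_ <= _); congr L1; apply: funext.
    + by have := q2 r; congr (_ <= _); congr L2; apply: funext.
    + by rewrite p1 p2 subrr.
    + by rewrite p1 p2 subrr.
  - by case=> j /=; [exact: r1 | exact: r2].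
move=> [x [p q r]]; split.
  exists (fun j => x (inl j)); split=> //.
  - by move=> r1; exact: (q (inl (inl r1))).
  - by move=> j; exact: (r (inl j)).
exists (fun j => x (inr j)); split=> //.
- move=> v; rewrite -p; apply/eqP; rewrite eq_le.
  have := q (inr (v, true)); have := q (inr (v, false)); rewrite /= !subr_le0 => -> -> //.
- by move=> r2; exact: (q (inl (inr r2))).
- by move=> j; exact: (r (inr j)).
Qed.

Lemma mirep_all (V K : finType) (S : K -> (V -> R) -> Prop) :
  (forall k, mirep (S k)) -> mirep (fun z => forall k, S k z).
Proof.
move=> h.
have : forall s : seq K, mirep (fun z => forall k, k \in s -> S k z).
  elim=> [|k s IH].
    by apply: mirep_ext; [exact: mirep_true | move=> z; split].
  eapply mirep_ext; first exact: (mirep_and (h k) IH).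
  move=> z; split.
    by move=> [h1 h2] k'; rewrite in_cons => /orP [/eqP -> //|]; exact: h2.
  move=> H; split; first by apply: H; rewrite mem_head.
  by move=> k' hk; apply: H; rewrite in_cons hk orbT.
move/(_ (index_enum K)) => H0; apply: (mirep_ext H0) => z; split=> H k //.
by apply: H; rewrite mem_index_enum.
Qed.

Lemma mirep_pre (V V' : finType) (S : (V' -> R) -> Prop) (L : V' -> (V -> R) -> R) :
  mirep S -> (forall v', aff (L v')) -> mirep (fun z => S (fun v' => L v' z)).
Proof.
move=> /mirep_elim [Z [Rw [e [L' [I [a h]]]]]] hL.
pose L2 := fun (r : Rw + (V' * bool)) (x : V + Z -> R) =>
  match r with
  | inl r1 => L' r1 (fun j => x (inr j))
  | inr (v', true) => x (inr (e v')) - L v' (fun j => x (inl j))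
  | inr (v', false) => L v' (fun j => x (inl j)) - x (inr (e v'))
  end.
pose I2 := fun j : V + Z => match j with inl _ => false | inr j => I j end.
apply: (mirep_aff (emb := inl) (L := L2) (I := I2)).
  case=> [r|[v' []]] /=.
  - by apply: aff_comp (a r) _ => j; exact: aff_var.
  - apply: aff_sub; first exact: aff_var.
    by apply: aff_comp (hL v') _ => j; exact: aff_var.
  - apply: aff_sub; last exact: aff_var.
    by apply: aff_comp (hL v') _ => j; exact: aff_var.
move=> z; rewrite h; split.
  move=> [x [p q r]]; exists (join z x); split=> //.
  - case=> [r1|[v' []]] /=.
    + by have := q r1; congr (_ <= _); congr L'; apply: funext.
    + by rewrite p subrr.
    + by rewrite p subrr.
  - by case=> j //=; exact: r.
move=> [x [p q r]].
have ez : (fun j => x (inl j)) = z by apply: funext.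
exists (fun j => x (inr j)); split.
- move=> v'; rewrite -ez; apply/eqP; rewrite eq_le.
  have := q (inr (v', true)); have := q (inr (v', false)); rewrite /= !subr_le0 => -> -> //.
- by move=> r1; exact: (q (inl r1)).
- by move=> j; exact: (r (inr j)).
Qed.


Lemma int01 (K : finType) (be : K -> R) :
  (forall k, 0 <= be k) -> (forall k, be k \is a Num.int) -> \sum_k be k = 1 ->
  exists k0, be k0 = 1 /\ forall k, k != k0 -> be k = 0.
Proof.
move=> b0 bi bs.
have [k0 hk0] : exists k0, be k0 != 0.
  case: (pselect (exists k0, be k0 != 0)) => // h; exfalso.
  have : \sum_k be k = 0.
    by rewrite big1 // => k _; apply/eqP; apply/negPn/negP => hk; apply: h; exists k.
  by rewrite bs => /eqP; rewrite oner_eq0.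
have g1 : 1 <= be k0 by rewrite -(ger0_norm (b0 k0)) norm_intr_ge1.
move: bs; rewrite (bigD1 k0) //= => bs.
have rest0 : \sum_(k | k != k0) be k = 0.
  have hr : 0 <= \sum_(k | k != k0) be k by rewrite sumr_ge0.
  move: bs hr g1; set S := \sum_(k | k != k0) be k => bs hr g1; lra.
exists k0; split.
  by move: bs; rewrite rest0 addr0.
move=> k hk; exact: (psumr_eq0P (fun i _ => b0 i) rest0 hk).
Qed.


Lemma ray_bounded (c d M : R) : (forall t, 0 <= t -> `|c + t * d| <= M) -> d = 0.
Proof.
move=> h; apply/eqP; apply/negPn/negP => d0.
have dp : 0 < `|d| by rewrite normr_gt0.
have M0 : 0 <= M by apply: le_trans (h 0 (lexx _)); exact: normr_ge0.
pose t := (M + `|c| + 1) / `|d|.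
have t0 : 0 <= t by rewrite divr_ge0 // addr_ge0 // addr_ge0.
have := h t t0.
have e : `|t * d| = M + `|c| + 1.
  by rewrite normrM ger0_norm // /t mulrAC -mulrA mulfV ?mulr1 // gt_eqF.
have := lerB_dist (t * d) (- c); rewrite opprK normrN addrC e => h1 h2.
rewrite addrC in h2; have := le_trans h1 h2; lra.
Qed.

Lemma join_split (V W : finType) (y : V + W -> R) :
  join (fun v => y (inl v)) (fun u => y (inr u)) = y.
Proof. by apply: funext; case. Qed.

Lemma mirep_union (V W Kt Rw : finType) (L : Kt -> Rw -> (V + W -> R) -> R) (M : R) :
  (forall k r, aff (L k r)) ->
  (forall k z w, (forall r, L k r (join z w) <= 0) -> forall v, `|z v| <= M) ->
  mirep (fun z => exists k w, forall r, L k r (join z w) <= 0).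
Proof.
move=> ha hb.
have [c hc] := choice (fun kr : Kt * Rw => ha kr.1 kr.2).
have [c0 hc0] := choice hc.
have hL : forall k r y, L k r y = \sum_j c (k, r) j * y j + c0 (k, r).
  by move=> k r y; exact: (hc0 (k, r) y).
pose NE k := `[< exists z w, forall r, L k r (join z w) <= 0 >].
pose Z : finType := (V + ((Kt * (V + W)) + Kt))%type.
pose X := fun (x : Z -> R) k j => x (inr (inl (k, j))).
pose B := fun (x : Z -> R) k => x (inr (inr k)).
pose L2 := fun (rr : ((((Kt * Rw) + ((Kt * (V + W)) * bool)) + (Kt * bool)) + bool) + (V * bool))
  (x : Z -> R) =>
  match rr with
  | inl (inl (inl (inl (k, r)))) =>
      if NE k then \sum_j c (k, r) j * X x k j + c0 (k, r) * B x k else 0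
  | inl (inl (inl (inr ((k, j), b)))) =>
      if NE k then 0 else (if b then X x k j else - X x k j)
  | inl (inl (inr (k, b))) => if b then - B x k else (if NE k then 0 else B x k)
  | inl (inr b) => if b then \sum_k B x k - 1 else 1 - \sum_k B x k
  | inr (v, b) => if b then x (inl v) - \sum_k X x k (inl v)
                  else \sum_k X x k (inl v) - x (inl v)
  end.
pose I2 := fun j : Z => match j with inr (inr _) => true | _ => false end.
have avar : forall j : Z, aff (fun x : Z -> R => x j) by move=> j; exact: aff_var.
apply: (mirep_aff (emb := inl) (L := L2) (I := I2)).
  case=> [[[[[k r]|[[k j] b]]|[k b]]|b]|[v b]]; rewrite /L2 /X /B /=.
  - case: (NE k); last exact: aff_cst.
    apply: aff_add; last by apply: aff_scale; exact: avar.
    apply: aff_sum => j; apply: aff_scale; exact: avar.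
  - case: (NE k); first exact: aff_cst.
    by case: b; [|apply: aff_opp].
  - case: b; first by apply: aff_opp.
    by case: (NE k); [exact: aff_cst|].
  - case: b.
      apply: aff_sub; [apply: aff_sum => k; exact: avar|exact: aff_cst].
    apply: aff_sub; [exact: aff_cst|apply: aff_sum => k; exact: avar].
  - case: b.
      apply: aff_sub; [exact: avar|apply: aff_sum => k; exact: avar].
    apply: aff_sub; [apply: aff_sum => k; exact: avar|exact: avar].
move=> z; split.
  move=> [k0 [w hk0]].
  have ne0 : NE k0 by apply/asboolP; exists z, w.
  pose x := join z (join (fun kj : Kt * (V + W) => if kj.1 == k0 then join z w kj.2 else 0)
                          (fun k => (k == k0)%:R)) : Z -> R.
  exists x; split=> //.
  - case=> [[[[[k r]|[[k j] b]]|[k b]]|b]|[v b]] /=.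
    + case: ifP => // _; rewrite /X /B /x /=.
      case: eqP => [->|_].
        by rewrite mulr1 -hL.
      rewrite mulr0 addr0 big1 // => j _; by rewrite mulr0.
    + case: ifP => nek //; rewrite /X /x /=.
      case: eqP => [ek|_]; first by rewrite ek ne0 in nek.
      by case: b; rewrite ?oppr0.
    + rewrite /B /x /=; case: b; first by rewrite oppr_le0; case: eqP.
      case: ifP => nek //; case: eqP => [ek|_] //; by rewrite ek ne0 in nek.
    + have -> : \sum_k B x k = 1.
        rewrite /B /x /= (bigD1 k0) //= eqxx big1 ?addr0 // => k /negbTE -> //.
      by case: b; rewrite subrr.
    + have -> : \sum_k X x k (inl v) = z v.
        rewrite /X /x /= (bigD1 k0) //= eqxx big1 ?addr0 // => k /negbTE -> //.
      by case: b; rewrite subrr.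
  - by case=> [//|[//|k]] _; rewrite /x /=; exact: natr_int.
move=> [x [p q r]].
have B0 : forall k, 0 <= B x k.
  by move=> k; have := q (inl (inl (inr (k, true)))); rewrite /= oppr_le0.
have Bi : forall k, B x k \is a Num.int by move=> k; exact: (r (inr (inr k))).
have Bs : \sum_k B x k = 1.
  apply/eqP; rewrite eq_le; apply/andP; split.
    by have := q (inl (inr true)); rewrite /= subr_le0.
  by have := q (inl (inr false)); rewrite /= subr_le0.
have [k0 [Bk0 Bk]] := int01 B0 Bi Bs.
have ne0 : NE k0.
  case nek: (NE k0) => //.
  by have := q (inl (inl (inr (k0, false)))); rewrite /= nek Bk0 ler10.
have feas0 : forall r0, L k0 r0 (X x k0) <= 0.
  move=> r0; have := q (inl (inl (inl (inl (k0, r0))))); rewrite /= ne0 Bk0 mulr1.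
  by rewrite hL.
have Xk : forall k v, k != k0 -> X x k (inl v) = 0.
  move=> k v nk.
  case nek: (NE k); last first.
    apply/eqP; rewrite eq_le.
    have := q (inl (inl (inl (inr ((k, inl v), true))))); rewrite /= nek => ->.
    by have := q (inl (inl (inl (inr ((k, inl v), false))))); rewrite /= nek oppr_le0 => ->.
  move/asboolP: nek => [z1 [w1 h1]].
  have hom : forall r0, \sum_j c (k, r0) j * X x k j <= 0.
    move=> r0; have := q (inl (inl (inl (inl (k, r0))))).
    have nek : NE k by apply/asboolP; exists z1, w1.
    by rewrite /= nek (Bk _ nk) mulr0 addr0.
  apply: (@ray_bounded (z1 v) _ M) => t t0.
  apply: (hb k (fun v => z1 v + t * X x k (inl v)) (fun u => w1 u + t * X x k (inr u))).
  move=> r0; rewrite hL.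
  have -> : \sum_j c (k, r0) j * join (fun v0 => z1 v0 + t * X x k (inl v0))
        (fun u => w1 u + t * X x k (inr u)) j =
      \sum_j c (k, r0) j * join z1 w1 j + t * \sum_j c (k, r0) j * X x k j.
    rewrite mulr_sumr -big_split; apply: eq_bigr; case=> j _ /=; ring.
  have := h1 r0; rewrite hL => h2.
  have := hom r0 => h3.
  set A := \sum_j c (k, r0) j * join z1 w1 j in h2 *.
  set Bb := \sum_j c (k, r0) j * X x k j in h3 *.
  nra.
exists k0, (fun u => X x k0 (inr u)) => r0.
have -> : join z (fun u => X x k0 (inr u)) = X x k0; last exact: feas0.
apply: funext; case=> [v|u] //=.
rewrite -p.
have := q (inr (v, true)); have := q (inr (v, false)); rewrite /= !subr_le0 => h1 h2.
have -> : x (inl v) = \sum_k X x k (inl v) by apply/eqP; rewrite eq_le h1 h2.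
rewrite (bigD1 k0) //= big1 ?addr0 // => k nk; exact: Xk.
Qed.

End Mirep.


Section AffV.
Variable R : realType.

Definition affv (Z : finType) (n : nat) (X : (Z -> R) -> 'cV[R]_n) :=
  forall i, aff (fun x => X x i 0).

Lemma affv_col (Z : finType) n (s : 'I_n -> Z) : affv (fun x : Z -> R => \col_i x (s i)).
Proof. move=> i; apply: aff_ext (aff_var R (s i)) => x; by rewrite mxE. Qed.

Lemma affv_cst (Z : finType) n (c : 'cV[R]_n) : affv (fun _ : Z -> R => c).
Proof. move=> i; exact: aff_cst. Qed.

Lemma affv_add (Z : finType) n (X Y : (Z -> R) -> 'cV[R]_n) :
  affv X -> affv Y -> affv (fun x => X x + Y x).
Proof. move=> hX hY i; apply: aff_ext (aff_add (hX i) (hY i)) => x; by rewrite mxE. Qed.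

Lemma affv_sub (Z : finType) n (X Y : (Z -> R) -> 'cV[R]_n) :
  affv X -> affv Y -> affv (fun x => X x - Y x).
Proof.
move=> hX hY i; apply: aff_ext (aff_sub (hX i) (hY i)) => x; by rewrite !mxE.
Qed.

Lemma affv_mul (Z : finType) r n (M : 'M[R]_(r, n)) (X : (Z -> R) -> 'cV[R]_n) :
  affv X -> affv (fun x => M *m X x).
Proof.
move=> hX i; apply: aff_ext (aff_sum predT (fun j => aff_scale (M i j) (hX j))) => x.
by rewrite mxE.
Qed.

Lemma affv_colmx (Z : finType) n1 n2 (X : (Z -> R) -> 'cV[R]_n1) (Y : (Z -> R) -> 'cV[R]_n2) :
  affv X -> affv Y -> affv (fun x => col_mx (X x) (Y x)).
Proof.
move=> hX hY i; rewrite -(@fintype.splitK n1 n2 i); case: (fintype.split i) => j /=.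
  by apply: aff_ext (hX j) => x; rewrite col_mxEu.
by apply: aff_ext (hY j) => x; rewrite col_mxEd.
Qed.

Lemma aff_row (Z : finType) n (M : 'rV[R]_n) (X : (Z -> R) -> 'cV[R]_n) :
  affv X -> aff (fun x => (M *m X x) 0 0).
Proof. by move=> hX; exact: (affv_mul M hX 0). Qed.

Lemma aff_lin (Z : finType) (F : (Z -> R) -> R) : aff F ->
  forall x e t, F (fun j => x j + t * e j) = F x + t * (F e - F (fun _ => 0)).
Proof.
move=> [c [c0 h]] x e t.
have h0 : F (fun _ => 0) = c0 by rewrite h big1 ?add0r // => j _; rewrite mulr0.
rewrite h0 !h.
have -> : \sum_j c j * (x j + t * e j) = \sum_j c j * x j + t * \sum_j c j * e j.
  rewrite mulr_sumr -big_split; apply: eq_bigr => j _ /=; ring.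
ring.
Qed.

Lemma qf_sum n1 n2 (a : 'cV[R]_n1) (M : 'M[R]_(n1, n2)) (b : 'cV[R]_n2) :
  (a^T *m M *m b) 0 0 = \sum_i \sum_j a i 0 * M i j * b j 0.
Proof.
rewrite mxE; rewrite exchange_big /=; apply: eq_bigr => j _.
rewrite mxE mulr_suml; apply: eq_bigr => i _; by rewrite !mxE.
Qed.

Lemma minJ_ge (n : nat) (F : 'I_n.+1 -> R) s : (s <= minJ F) <-> (forall j, s <= F j).
Proof.
rewrite /minJ; split.
  move=> h j; apply: le_trans h _; exact: bigmin_le.
move=> h; apply: le_bigmin => //; exact: h.
Qed.

Lemma minJ_le (n : nat) (F : 'I_n.+1 -> R) j : minJ F <= F j.
Proof. by have /minJ_ge := lexx (minJ F); apply. Qed.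

End AffV.


Section Argmax.
Variables (R : realType) (nx nu nth npi : nat).
Variables (Q : 'M[R]_(nx + nu)) (H : 'M[R]_(nth + npi, nx + nu))
  (K : nat) (m : 'I_K -> nat)
  (F : forall i : 'I_K, 'I_(m i).+1 -> 'rV[R]_(nx + nu + nth + npi))
  (zeta : forall i : 'I_K, 'I_(m i).+1 -> R)
  (A : 'M[R]_nx) (B : 'M[R]_(nx, nu)) (k : 'cV[R]_nx) (p : 'cV[R]_npi).
Variables (mU : nat) (AU : 'M[R]_(mU, nu)) (bU : 'cV[R]_mU).
Hypothesis PSDQ : PSD Q.

Definition hh (x : 'cV[R]_nx) (u : 'cV[R]_nu) := A *m x + B *m u + k.
Definition quadpart (x : 'cV[R]_nx) (v : 'cV[R]_nu) (th : 'cV[R]_nth) :=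
  - ((col_mx (hh x v) v)^T *m Q *m col_mx (hh x v) v) 0 0
  + ((col_mx th p)^T *m H *m col_mx (hh x v) v) 0 0.
Definition fterm (x : 'cV[R]_nx) (v : 'cV[R]_nu) (th : 'cV[R]_nth) (i : 'I_K) (j : 'I_(m i).+1) :=
  (@F i j *m cat4 (hh x v) v th p) 0 0 + @zeta i j.
Arguments fterm : clear implicits.

Lemma f_split x v th :
  f_util Q H F zeta (hh x v) v th p = quadpart x v th + \sum_i minJ (fterm x v th i).
Proof. by []. Qed.

Definition Pp := ('I_nx + 'I_nth)%type.
Definition Yt := ('I_nu + 'I_K)%type.
Definition Xi : finType := (Pp + Yt)%type.

Definition xL (xi : Xi -> R) : 'cV[R]_nx := \col_i xi (inl (inl i)).
Definition thL (xi : Xi -> R) : 'cV[R]_nth := \col_i xi (inl (inr i)).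
Definition vL (xi : Xi -> R) : 'cV[R]_nu := \col_i xi (inr (inl i)).
Definition sL (xi : Xi -> R) (i : 'I_K) := xi (inr (inr i)).

Definition Phi (xi : Xi -> R) := quadpart (xL xi) (vL xi) (thL xi) + \sum_i sL xi i.

Definition RwL := ('I_mU + {i : 'I_K & 'I_(m i).+1})%type.

Definition gL (r : RwL) (xi : Xi -> R) : R :=
  match r with
  | inl a => (AU *m vL xi) a 0 - bU a 0
  | inr s => sL xi (tag s) - fterm (xL xi) (vL xi) (thL xi) (tag s) (tagged s)
  end.

Lemma affv_xL : affv (@xL). Proof. exact: affv_col. Qed.
Lemma affv_thL : affv (@thL). Proof. exact: affv_col. Qed.
Lemma affv_vL : affv (@vL). Proof. exact: affv_col. Qed.

Lemma affv_W : affv (fun xi => col_mx (hh (xL xi) (vL xi)) (vL xi)).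
Proof.
apply: affv_colmx; last exact: affv_vL.
apply: affv_add; last exact: affv_cst.
apply: affv_add; apply: affv_mul; [exact: affv_xL|exact: affv_vL].
Qed.

Lemma affv_T : affv (fun xi => col_mx (thL xi) p).
Proof. apply: affv_colmx; [exact: affv_thL|exact: affv_cst]. Qed.

Lemma aff_gL r : aff (gL r).
Proof.
case: r => [a|s] /=.
  apply: aff_sub; last exact: aff_cst.
  exact: (affv_mul AU affv_vL a).
apply: aff_sub; first exact: aff_var.
apply: aff_add; last exact: aff_cst.
apply: aff_row.
apply: affv_colmx; last exact: affv_cst.
apply: affv_colmx; last exact: affv_thL.
apply: affv_colmx; last exact: affv_vL.
apply: affv_add; last exact: affv_cst.
apply: affv_add; apply: affv_mul; [exact: affv_xL|exact: affv_vL].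
Qed.

Definition Wf (xi : Xi -> R) a := (col_mx (hh (xL xi) (vL xi)) (vL xi)) a 0.
Definition Tf (xi : Xi -> R) a := (col_mx (thL xi) p) a 0.

Lemma Phi_sum xi : Phi xi =
  - (\sum_a \sum_b Wf xi a * Q a b * Wf xi b)
  + \sum_a \sum_b Tf xi a * H a b * Wf xi b + \sum_i sL xi i.
Proof. by rewrite /Phi /quadpart !qf_sum. Qed.

Lemma quad_Phi : quad Phi.
Proof.
apply: (quad_ext (fun xi => esym (Phi_sum xi))).
apply: quad_add; last by apply: aff_quad; apply: aff_sum => i; exact: aff_var.
apply: quad_add.
  apply: (quad_ext (fun xi => mulN1r _)); apply: quad_scale.
  apply: quad_sum => a; apply: quad_sum => b.
  apply: (quad_ext (fun xi => mulrA _ _ _)).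
  apply: quad_mul; first exact: affv_W.
  apply: aff_scale; exact: affv_W.
apply: quad_sum => a; apply: quad_sum => b.
apply: quad_mul; last exact: affv_W.
apply: aff_mulr; exact: affv_T.
Qed.


Variables (X : 'cV[R]_nx -> Prop) (U : 'cV[R]_nu -> Prop) (Th : 'cV[R]_nth -> Prop).
Variables (mX : nat) (AX : 'M[R]_(mX, nx)) (bX : 'cV[R]_mX)
  (mTh : nat) (ATh : 'M[R]_(mTh, nth)) (bTh : 'cV[R]_mTh).
Hypothesis hX : forall x, X x <-> leV (AX *m x) bX.
Hypothesis hU : forall u, U u <-> leV (AU *m u) bU.
Hypothesis hTh : forall th, Th th <-> leV (ATh *m th) bTh.
Variables (MX MU MTh : R).
Hypothesis bdX : forall x, X x -> forall i, `|x i 0| <= MX.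
Hypothesis bdU : forall x, U x -> forall i, `|x i 0| <= MU.
Hypothesis bdTh : forall x, Th x -> forall i, `|x i 0| <= MTh.

Definition Vt : finType := (Pp + 'I_nu)%type.
Definition xv (z : Vt -> R) : 'cV[R]_nx := \col_i z (inl (inl i)).
Definition thv (z : Vt -> R) : 'cV[R]_nth := \col_i z (inl (inr i)).
Definition uv (z : Vt -> R) : 'cV[R]_nu := \col_i z (inr i).

Definition AM (z : Vt -> R) :=
  [/\ X (xv z), Th (thv z), U (uv z) &
      forall v, U v -> f_util Q H F zeta (hh (xv z) v) v (thv z) p <=
                       f_util Q H F zeta (hh (xv z) (uv z)) (uv z) (thv z) p].

Lemma col_id n (v : 'cV[R]_n) : \col_i v i 0 = v.
Proof. by apply/matrixP => i j; rewrite mxE (ord1 j). Qed.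

Lemma leV_rows r n (M : 'M[R]_(r, n)) x b : leV (M *m x) b <-> forall a, (M *m x) a 0 - b a 0 <= 0.
Proof. by split=> h a; [rewrite subr_le0 h | rewrite -subr_le0 h]. Qed.

Section KK.
Variables (Gq : (Xi -> R) -> Xi -> R) (F2 : (Xi -> R) -> R).
Hypothesis HGq : forall j, aff (fun x => Gq x j).
Hypothesis Hq : forall x d t,
  Phi (fun j => x j + t * d j) = Phi x + t * dotv (Gq x) d + t ^+ 2 * F2 d.
Variables (cg : RwL -> Xi -> R) (cg0 : RwL -> R).
Hypothesis Hcg : forall r xi, gL r xi = \sum_j cg r j * xi j + cg0 r.

Definition join0 (d : Yt -> R) : Xi -> R := join (fun _ : Pp => 0) d.
Definition PhiP (P0 : Pp -> R) (y : Yt -> R) := Phi (join P0 y).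
Definition GP (P0 : Pp -> R) (y : Yt -> R) (j : Yt) := Gq (join P0 y) (inr j).
Definition Cd (d : Yt -> R) := - F2 (join0 d).
Definition gP (P0 : Pp -> R) (r : RwL) (y : Yt -> R) := gL r (join P0 y).
Definition aco (r : RwL) (j : Yt) := cg r (inr j).

Lemma join_lin (P0 : Pp -> R) (y d : Yt -> R) t :
  join P0 (fun j => y j + t * d j) = (fun j => join P0 y j + t * join0 d j).
Proof. by apply: funext; case=> //= q; rewrite mulr0 addr0. Qed.

Lemma hexpP P0 y d t :
  PhiP P0 (fun j => y j + t * d j) = PhiP P0 y + t * dotv (GP P0 y) d - t ^+ 2 * Cd d.
Proof.
rewrite /PhiP join_lin Hq /Cd.
have -> : dotv (Gq (join P0 y)) (join0 d) = dotv (GP P0 y) d.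
  rewrite /dotv big_sumType /= big1 ?add0r // => q _; by rewrite mulr0.
by rewrite mulrN opprK.
Qed.

Lemma hgP P0 r y d :
  gP P0 r (fun j => y j + d j) = gP P0 r y + dotv (aco r) d.
Proof.
rewrite /gP !Hcg.
have -> : join P0 (fun j => y j + d j) = (fun j => join P0 y j + 1 * join0 d j).
  by rewrite -join_lin; congr join; apply: funext => j; rewrite mul1r.
have -> : \sum_j cg r j * (join P0 y j + 1 * join0 d j) =
  \sum_j cg r j * join P0 y j + \sum_j cg r j * join0 d j.
  by rewrite -big_split; apply: eq_bigr => j _ /=; rewrite mul1r mulrDr.
have -> : \sum_j cg r j * join0 d j = dotv (aco r) d.
  rewrite big_sumType /= big1 ?add0r // => q _; by rewrite mulr0.
ring.
Qed.

Lemma HCP d : 0 <= Cd d.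
Proof.
rewrite /Cd; set e := join0 d; set x0 := fun _ : Xi => (0 : R).
pose D a := Wf e a - Wf x0 a.
have hW : forall t a, Wf (fun j => x0 j + t * e j) a = Wf x0 a + t * D a.
  move=> t a; have h := aff_lin (affv_W a) x0 e t; cbv beta in h.
  by rewrite /Wf h.
have hTe : forall a, Tf e a = Tf x0 a.
  move=> a; rewrite /Tf.
  have -> : thL e = thL x0 by apply/matrixP => i j; rewrite !mxE.
  by [].
have hT : forall t a, Tf (fun j => x0 j + t * e j) a = Tf x0 a.
  move=> t a; have h := aff_lin (affv_T a) x0 e t; cbv beta in h.
  by rewrite /Tf h -/(Tf e a) hTe subrr mulr0 addr0.
have hs : forall t i, sL (fun j => x0 j + t * e j) i = t * sL e i.
  by move=> t i; rewrite /sL /x0 add0r.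
set S := \sum_a \sum_b D a * Q a b * D b.
have S0 : 0 <= S.
  have := PSDQ (\col_a D a); rewrite qf_sum /S.
  by under eq_bigr do under eq_bigr do rewrite !mxE.
set L1 := - (\sum_a \sum_b (Wf x0 a * Q a b * D b + D a * Q a b * Wf x0 b))
  + \sum_a \sum_b Tf x0 a * H a b * D b + \sum_i sL e i.
have key : forall t, Phi (fun j => x0 j + t * e j) = Phi x0 + t * L1 + t ^+ 2 * (- S).
  move=> t; rewrite !Phi_sum.
  under eq_bigr do under eq_bigr do rewrite !hW.
  under [X in _ + X + _ = _]eq_bigr do under eq_bigr do rewrite hT hW.
  under [X in _ + X = _]eq_bigr do rewrite hs.
  have e1 : \sum_a \sum_b (Wf x0 a + t * D a) * Q a b * (Wf x0 b + t * D b) =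
    \sum_a \sum_b Wf x0 a * Q a b * Wf x0 b
    + t * (\sum_a \sum_b (Wf x0 a * Q a b * D b + D a * Q a b * Wf x0 b))
    + t ^+ 2 * S.
    rewrite /S !mulr_sumr -!big_split; apply: eq_bigr => a _.
    rewrite !mulr_sumr -!big_split; apply: eq_bigr => b _ /=; ring.
  have e2 : \sum_a \sum_b Tf x0 a * H a b * (Wf x0 b + t * D b) =
    \sum_a \sum_b Tf x0 a * H a b * Wf x0 b + t * \sum_a \sum_b Tf x0 a * H a b * D b.
    rewrite !mulr_sumr -!big_split; apply: eq_bigr => a _.
    rewrite !mulr_sumr -!big_split; apply: eq_bigr => b _ /=; ring.
  have e3 : \sum_i t * sL e i = t * \sum_i sL e i by rewrite mulr_sumr.
  have e4 : \sum_i sL x0 i = 0 by rewrite big1.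
  rewrite e1 e2 e3 e4 /L1; ring.
have h1 := Hq x0 e 1; have h2 := Hq x0 e (-1).
have k1 := key 1; have k2 := key (-1).
rewrite h1 in k1; rewrite h2 in k2.
rewrite expr1n in k1; rewrite sqrrN expr1n in k2.
move: k1 k2; set G1 := dotv _ _; move=> k1 k2.
lra.
Qed.

Lemma kkt_iff P0 y0 : kfeas (gP P0) y0 ->
  ((forall y, kfeas (gP P0) y -> PhiP P0 y <= PhiP P0 y0) <->
   exists lam : RwL -> R, [/\ forall r, 0 <= lam r, forall r, lam r * gP P0 r y0 = 0 &
      forall j, GP P0 y0 j = \sum_r lam r * aco r j]).
Proof.
move=> f0; split.
  exact: (kkt_nec (hexpP P0) HCP (hgP P0) f0).
move=> [lam [l0 comp st]] y fy.
exact: (kkt_suff (hexpP P0) HCP (hgP P0) l0 comp st fy).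
Qed.

End KK.


Definition xP (P0 : Pp -> R) : 'cV[R]_nx := \col_i P0 (inl i).
Definition thP (P0 : Pp -> R) : 'cV[R]_nth := \col_i P0 (inr i).
Definition vY (y : Yt -> R) : 'cV[R]_nu := \col_i y (inl i).

Lemma PhiP_val P0 y : PhiP P0 y = quadpart (xP P0) (vY y) (thP P0) + \sum_i y (inr i).
Proof. by []. Qed.

Lemma kf_char P0 y : kfeas (gP P0) y <->
  U (vY y) /\ forall i, y (inr i) <= minJ (fterm (xP P0) (vY y) (thP P0) i).
Proof.
split.
  move=> h; split.
    apply/hU/leV_rows => a; exact: (h (inl a)).
  move=> i; apply/minJ_ge => j; rewrite -subr_le0; exact: (h (inr (existT _ i j))).
move=> [/hU/leV_rows hu hs] [a|[i j]]; first exact: hu.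
rewrite /gP /= subr_le0; apply: le_trans (hs i) _; exact: minJ_le.
Qed.

Section KU.
Variables (Gq : (Xi -> R) -> Xi -> R) (F2 : (Xi -> R) -> R).
Hypothesis HGq : forall j, aff (fun x => Gq x j).
Hypothesis Hq : forall x d t,
  Phi (fun j => x j + t * d j) = Phi x + t * dotv (Gq x) d + t ^+ 2 * F2 d.
Variables (cg : RwL -> Xi -> R) (cg0 : RwL -> R).
Hypothesis Hcg : forall r xi, gL r xi = \sum_j cg r j * xi j + cg0 r.

Definition Wt : finType := ('I_K + RwL)%type.
Definition xil (y : Vt + Wt -> R) : Xi -> R :=
  join (fun q => y (inl (inl q))) (join (fun i => y (inl (inr i))) (fun i => y (inr (inl i)))).
Definition lam (y : Vt + Wt -> R) (r : RwL) := y (inr (inr r)).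
Definition RowT : finType := ((('I_mX + 'I_mTh) + RwL) + ((RwL + (Yt * bool)) + RwL))%type.

Definition Lrow (dl : {ffun RwL -> bool}) (rr : RowT) (y : Vt + Wt -> R) : R :=
  match rr with
  | inl (inl (inl a)) => (AX *m xL (xil y)) a 0 - bX a 0
  | inl (inl (inr a)) => (ATh *m thL (xil y)) a 0 - bTh a 0
  | inl (inr r) => gL r (xil y)
  | inr (inl (inl r)) => - lam y r
  | inr (inl (inr (j, b))) =>
      if b then Gq (xil y) (inr j) - \sum_r lam y r * aco cg r j
      else \sum_r lam y r * aco cg r j - Gq (xil y) (inr j)
  | inr (inr r) => if dl r then - gL r (xil y) else lam y r
  end.

Lemma aff_xil (G : (Xi -> R) -> R) : aff G -> aff (fun y => G (xil y)).
Proof.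
move=> hG; apply: (aff_comp (G := fun v y => xil y v) hG) => -[q|[i|i]];
  rewrite /xil /join /=; exact: aff_var.
Qed.

Lemma aff_Lrow dl rr : aff (Lrow dl rr).
Proof.
case: rr => [[[a|a]|r]|[[r|[j b]]|r]]; rewrite /Lrow.
- apply: (aff_xil (G := fun xi => (AX *m xL xi) a 0 - bX a 0)).
  apply: aff_sub; [exact: (affv_mul AX affv_xL a)|exact: aff_cst].
- apply: (aff_xil (G := fun xi => (ATh *m thL xi) a 0 - bTh a 0)).
  apply: aff_sub; [exact: (affv_mul ATh affv_thL a)|exact: aff_cst].
- exact: (aff_xil (aff_gL r)).
- apply: aff_opp; exact: aff_var.
- have h1 : aff (fun y => Gq (xil y) (inr j)) by exact: (aff_xil (HGq (inr j))).
  have h2 : aff (fun y : Vt + Wt -> R => \sum_r lam y r * aco cg r j).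
    apply: aff_sum => r; apply: aff_mulr; exact: aff_var.
  by case: b; apply: aff_sub.
- rewrite /Lrow; case: (dl r); last exact: aff_var.
  apply: aff_opp; exact: (aff_xil (aff_gL r)).
Qed.

Lemma union_iff z :
  (exists (dl : {ffun RwL -> bool}) (w : Wt -> R), forall rr, Lrow dl rr (join z w) <= 0)
  <-> AM z.
Proof.
pose P0 := fun q : Pp => z (inl q).
have kk := kkt_iff Hq Hcg.
split.
  move=> [dl [w h]].
  pose y0 := join (fun i => z (inr i)) (fun i => w (inl i)) : Yt -> R.
  have hXz : X (xv z) by apply/hX/leV_rows => a; exact: (h (inl (inl (inl a)))).
  have hThz : Th (thv z) by apply/hTh/leV_rows => a; exact: (h (inl (inl (inr a)))).
  have fy : kfeas (gP P0) y0 by move=> r; exact: (h (inl (inr r))).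
  have [hu hs] := (kf_char P0 y0).1 fy.
  pose la := fun r => w (inr r).
  have l0 : forall r, 0 <= la r.
    by move=> r; have := h (inr (inl (inl r))); rewrite /= oppr_le0.
  have comp : forall r, la r * gP P0 r y0 = 0.
    move=> r; have := h (inr (inr r)); rewrite /Lrow.
    case: (dl r) => hr.
      have g0 : gP P0 r y0 = 0.
        by apply/eqP; rewrite eq_le fy /=; rewrite oppr_le0 in hr.
      by rewrite g0 mulr0.
    have -> : la r = 0 by apply/eqP; rewrite eq_le l0 andbT.
    by rewrite mul0r.
  have st : forall j, GP Gq P0 y0 j = \sum_r la r * aco cg r j.
    move=> j; apply/eqP; rewrite eq_le.
    have := h (inr (inl (inr (j, true)))); have := h (inr (inl (inr (j, false)))).
    rewrite /Lrow !subr_le0 => -> -> //.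
  have opt := (kk P0 y0 fy).2 (ex_intro _ la (And3 l0 comp st)).
  split=> // v Uv.
  pose y := join (fun i => v i 0) (fun i => minJ (fterm (xv z) v (thv z) i)) : Yt -> R.
  have ev : vY y = v by exact: col_id.
  have fyv : kfeas (gP P0) y.
    by apply/kf_char; rewrite ev; split=> // i.
  have := opt y fyv; rewrite !PhiP_val ev !f_split.
  move=> h1; apply: (le_trans h1); rewrite lerD2l.
  apply: ler_sum => i _; exact: hs.
move=> [hXz hThz hUz opt].
pose s := fun i => minJ (fterm (xv z) (uv z) (thv z) i).
pose y0 := join (fun i => z (inr i)) s : Yt -> R.
have fy : kfeas (gP P0) y0.
  by apply/kf_char; split=> // i.
have op : forall y, kfeas (gP P0) y -> PhiP P0 y <= PhiP P0 y0.
  move=> y /kf_char [hv hs].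
  have := opt _ hv; rewrite !f_split !PhiP_val => h1.
  apply: le_trans h1; rewrite lerD2l; apply: ler_sum => i _; exact: hs.
have [la [l0 comp st]] := (kk P0 y0 fy).1 op.
exists [ffun r => la r != 0], (join s la).
case=> [[[a|a]|r]|[[r|[j b]]|r]]; rewrite /Lrow.
- by move/hX/leV_rows: hXz; apply.
- by move/hTh/leV_rows: hThz; apply.
- exact: fy.
- by rewrite oppr_le0; exact: l0.
- have e := st j; rewrite /GP in e.
  by case: b; rewrite /= e subrr.
- rewrite ffunE; case: (eqVneq (la r) 0) => [l0r|nl].
    by rewrite /=; change (la r <= 0); rewrite l0r.
  rewrite /=.
  have := comp r; move/eqP; rewrite mulf_eq0 (negbTE nl) /= => /eqP g0.
  by rewrite /gP in g0; rewrite g0 oppr0.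
Qed.

End KU.

Lemma argmax_rep : mirep AM.
Proof.
have [Gq [F2 [HGq Hq]]] := quad_expand quad_Phi.
have [cg hcg] := choice (fun r => aff_gL r).
have [cg0 Hcg] := choice hcg.
apply: (mirep_ext (mirep_union (L := fun dl rr y => Lrow Gq cg dl rr y)
   (M := `|MX| + `|MTh| + `|MU|) _ _)).
- move=> dl rr; exact: (aff_Lrow HGq).
- move=> dl z w h.
  have hXz : X (xv z) by apply/hX/leV_rows => a; exact: (h (inl (inl (inl a)))).
  have hThz : Th (thv z) by apply/hTh/leV_rows => a; exact: (h (inl (inl (inr a)))).
  have hUz : U (uv z) by apply/hU/leV_rows => a; exact: (h (inl (inr (inl a)))).
  have nX := normr_ge0 MX; have nT := normr_ge0 MTh; have nU := normr_ge0 MU.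
  have lX := ler_norm MX; have lT := ler_norm MTh; have lU := ler_norm MU.
  case=> [[i|i]|i].
  + have := bdX hXz i; rewrite mxE => hi; lra.
  + have := bdTh hThz i; rewrite mxE => hi; lra.
  + have := bdU hUz i; rewrite mxE => hi; lra.
- move=> z; have := union_iff Hq Hcg z; by [].
Qed.

End Argmax.


Section MIS.
Variable R : realType.

Lemma mis_rep n (S : 'cV[R]_n -> Prop) :
  mixed_integer_set S -> mirep (fun z : 'I_n -> R => S (\col_i z i)).
Proof.
move=> [k [m [A [b [I h]]]]].
exists 'I_(n + k), 'I_m, (fun i => lshift k i),
  (fun r j => A r j), (fun r => b r 0), I => z.
rewrite h; split.
  move=> [w [hA hI]]; exists (fun j => (col_mx (\col_i z i) w) j 0); split.
  - by move=> v; rewrite col_mxEu mxE.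
  - by move=> r; have := hA r; rewrite mxE.
  - by move=> j hj; exact: hI.
move=> [x [he hr hi]]; exists (\col_i x (rshift n i)).
have ec : col_mx (\col_i z i) (\col_i x (rshift n i)) = \col_j x j.
  apply/matrixP => j c; rewrite (ord1 c) mxE.
  rewrite -(@fintype.splitK n k j); case: (fintype.split j) => i /=.
    by rewrite col_mxEu mxE he.
  by rewrite col_mxEd mxE.
rewrite ec; split.
  by move=> r; rewrite mxE; apply: le_trans (hr r); under eq_bigr do rewrite mxE.
by move=> j hj; rewrite mxE; exact: hi.
Qed.

End MIS.

Section GG.
Variables (R : realType) (nx nu nth npi : nat).
Variables (X : 'cV[R]_nx -> Prop) (U : 'cV[R]_nu -> Prop) (Th : 'cV[R]_nth -> Prop).
Variables (mX : nat) (AX : 'M[R]_(mX, nx)) (bX : 'cV[R]_mX)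
  (mU : nat) (AU : 'M[R]_(mU, nu)) (bU : 'cV[R]_mU)
  (mTh : nat) (ATh : 'M[R]_(mTh, nth)) (bTh : 'cV[R]_mTh).
Hypothesis hX : forall x, X x <-> leV (AX *m x) bX.
Hypothesis hU : forall u, U u <-> leV (AU *m u) bU.
Hypothesis hTh : forall th, Th th <-> leV (ATh *m th) bTh.
Variables (MX MU MTh : R).
Hypothesis bdX : forall x, X x -> forall i, `|x i 0| <= MX.
Hypothesis bdU : forall x, U x -> forall i, `|x i 0| <= MU.
Hypothesis bdTh : forall x, Th x -> forall i, `|x i 0| <= MTh.
Variables (g : 'cV[R]_nx -> 'cV[R]_nu -> 'cV[R]_nth -> 'cV[R]_npi -> 'cV[R]_nth)
  (P : nat) (r : 'I_P -> nat)
  (Bg : forall i : 'I_P, 'M[R]_(r i, nx + nu + nth + npi))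
  (psi : forall i : 'I_P, 'cV[R]_(r i))
  (G : forall i : 'I_P, 'M[R]_(nth, nx + nu + nth + npi))
  (chi : forall i : 'I_P, 'cV[R]_nth) (p : 'cV[R]_npi).
Hypothesis hpiece : forall x u th, X x -> U u -> Th th ->
  exists i, leV (Bg i *m cat4 x u th p) (psi i).
Hypothesis hgval : forall x u th i, X x -> U u -> Th th ->
  leV (Bg i *m cat4 x u th p) (psi i) -> g x u th p = G i *m cat4 x u th p + chi i.

Definition Vg : finType := ((('I_nx + 'I_nu) + 'I_nth) + 'I_nth)%type.
Definition xg (z : Vg -> R) : 'cV[R]_nx := \col_i z (inl (inl (inl i))).
Definition ug (z : Vg -> R) : 'cV[R]_nu := \col_i z (inl (inl (inr i))).
Definition thg (z : Vg -> R) : 'cV[R]_nth := \col_i z (inl (inr i)).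
Definition th2 (z : Vg -> R) : 'cV[R]_nth := \col_i z (inr i).
Definition c4 (z : Vg -> R) := cat4 (xg z) (ug z) (thg z) p.

Definition GS (z : Vg -> R) :=
  [/\ X (xg z), U (ug z), Th (thg z), Th (th2 z) & th2 z = g (xg z) (ug z) (thg z) p].

Definition PsiRows := {i : 'I_P & 'I_(r i)}.
Definition RowG : finType :=
  ((((('I_mX + 'I_mU) + 'I_mTh) + 'I_mTh) + PsiRows) + ('I_nth * bool))%type.

Definition Lg (kk : 'I_P) (rr : RowG) (y : Vg + void -> R) : R :=
  let z := fun v => y (inl v) in
  match rr with
  | inl (inl (inl (inl (inl a)))) => (AX *m xg z) a 0 - bX a 0
  | inl (inl (inl (inl (inr a)))) => (AU *m ug z) a 0 - bU a 0
  | inl (inl (inl (inr a))) => (ATh *m thg z) a 0 - bTh a 0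
  | inl (inl (inr a)) => (ATh *m th2 z) a 0 - bTh a 0
  | inl (inr s) => if tag s == kk then (Bg (tag s) *m c4 z) (tagged s) 0 - psi (tag s) (tagged s) 0
                   else 0
  | inr (a, b) => if b then th2 z a 0 - (G kk *m c4 z + chi kk) a 0
                  else (G kk *m c4 z + chi kk) a 0 - th2 z a 0
  end.

Lemma affv_c4 : affv (fun y : Vg + void -> R => c4 (fun v => y (inl v))).
Proof.
rewrite /c4 /cat4.
apply: affv_colmx; last exact: affv_cst.
apply: affv_colmx; last exact: affv_col.
by apply: affv_colmx; exact: affv_col.
Qed.

Lemma aff_Lg kk rr : aff (Lg kk rr).
Proof.
have hx : affv (fun y : Vg + void -> R => xg (fun v => y (inl v))) by exact: affv_col.
have hu : affv (fun y : Vg + void -> R => ug (fun v => y (inl v))) by exact: affv_col.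
have ht : affv (fun y : Vg + void -> R => thg (fun v => y (inl v))) by exact: affv_col.
have ht2 : affv (fun y : Vg + void -> R => th2 (fun v => y (inl v))) by exact: affv_col.
case: rr => [[[[[a|a]|a]|a]|[i a]]|[a b]]; rewrite /Lg.
- apply: aff_sub; [exact: (affv_mul AX hx a)|exact: aff_cst].
- apply: aff_sub; [exact: (affv_mul AU hu a)|exact: aff_cst].
- apply: aff_sub; [exact: (affv_mul ATh ht a)|exact: aff_cst].
- apply: aff_sub; [exact: (affv_mul ATh ht2 a)|exact: aff_cst].
- rewrite /=; case: (i == kk); last exact: aff_cst.
  apply: aff_sub; [exact: (affv_mul (Bg i) affv_c4 a)|exact: aff_cst].
- have h1 : aff (fun y : Vg + void -> R => (G kk *m c4 (fun v => y (inl v)) + chi kk) a 0).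
    exact: (affv_add (affv_mul (G kk) affv_c4) (affv_cst _ _) a).
  by case: b; apply: aff_sub => //; exact: ht2.
Qed.

Lemma g_rep : mirep GS.
Proof.
apply: (mirep_ext (mirep_union (L := Lg) (M := `|MX| + `|MU| + `|MTh|) (fun kk rr => aff_Lg kk rr) _)).
  move=> kk z w h.
  have hXz : X (xg z) by apply/hX/leV_rows => a; exact: (h (inl (inl (inl (inl (inl a)))))).
  have hUz : U (ug z) by apply/hU/leV_rows => a; exact: (h (inl (inl (inl (inl (inr a)))))).
  have hTz : Th (thg z) by apply/hTh/leV_rows => a; exact: (h (inl (inl (inl (inr a))))).
  have hT2 : Th (th2 z) by apply/hTh/leV_rows => a; exact: (h (inl (inl (inr a)))).
  have nX := normr_ge0 MX; have nT := normr_ge0 MTh; have nU := normr_ge0 MU.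
  have lX := ler_norm MX; have lT := ler_norm MTh; have lU := ler_norm MU.
  case=> [[[i|i]|i]|i].
  + have := bdX hXz i; rewrite mxE => hi; lra.
  + have := bdU hUz i; rewrite mxE => hi; lra.
  + have := bdTh hTz i; rewrite mxE => hi; lra.
  + have := bdTh hT2 i; rewrite mxE => hi; lra.
move=> z; split.
  move=> [kk [w h]].
  have hXz : X (xg z) by apply/hX/leV_rows => a; exact: (h (inl (inl (inl (inl (inl a)))))).
  have hUz : U (ug z) by apply/hU/leV_rows => a; exact: (h (inl (inl (inl (inl (inr a)))))).
  have hTz : Th (thg z) by apply/hTh/leV_rows => a; exact: (h (inl (inl (inl (inr a))))).
  have hT2 : Th (th2 z) by apply/hTh/leV_rows => a; exact: (h (inl (inl (inr a)))).
  have hp : leV (Bg kk *m c4 z) (psi kk).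
    apply/leV_rows => a; have := h (inl (inr (existT _ kk a))); by rewrite /Lg /= eqxx.
  split=> //; rewrite (hgval hXz hUz hTz hp).
  apply/matrixP => a c; rewrite (ord1 c); apply/eqP; rewrite eq_le.
  have := h (inr (a, true)); have := h (inr (a, false)); rewrite /Lg /= !subr_le0 => -> ->.
  by [].
move=> [hXz hUz hTz hT2 e].
have [kk hp] := hpiece hXz hUz hTz.
have e2 := hgval hXz hUz hTz hp.
exists kk, (fun v : void => match v with end).
case=> [[[[[a|a]|a]|a]|[i a]]|[a b]]; rewrite /Lg /=.
- by move/hX/leV_rows: hXz; apply.
- by move/hU/leV_rows: hUz; apply.
- by move/hTh/leV_rows: hTz; apply.
- by move/hTh/leV_rows: hT2; apply.
- case: eqP => // ei; subst i.
  by move/leV_rows: hp; apply.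
- have : th2 z a 0 = (G kk *m c4 z + chi kk) a 0 by rewrite e e2.
  by case: b => /= ->; rewrite subrr.
Qed.

End GG.


Section Final.
Variables (R : realType) (nx nu nth npi mx my : nat).
Variables (X : 'cV[R]_nx -> Prop) (U : 'cV[R]_nu -> Prop) (Th : 'cV[R]_nth -> Prop).
Variables (Q : 'M[R]_(nx + nu)) (H : 'M[R]_(nth + npi, nx + nu))
  (K : nat) (m : 'I_K -> nat)
  (F : forall i : 'I_K, 'I_(m i).+1 -> 'rV[R]_(nx + nu + nth + npi))
  (zeta : forall i : 'I_K, 'I_(m i).+1 -> R)
  (A : 'M[R]_nx) (B : 'M[R]_(nx, nu)) (k : 'cV[R]_nx).
Variables (g : 'cV[R]_nx -> 'cV[R]_nu -> 'cV[R]_nth -> 'cV[R]_npi -> 'cV[R]_nth)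
  (P : nat) (r : 'I_P -> nat)
  (Bg : forall i : 'I_P, 'M[R]_(r i, nx + nu + nth + npi))
  (psi : forall i : 'I_P, 'cV[R]_(r i))
  (G : forall i : 'I_P, 'M[R]_(nth, nx + nu + nth + npi))
  (chi : forall i : 'I_P, 'cV[R]_nth).
Variables (D : 'M[R]_(mx, nx)) (C : 'M[R]_(my, nu)) (pnu pom : R -> R).
Variables (N nxo nuo : nat) (tx : 'I_nxo.+1 -> nat) (xo : 'I_nxo.+1 -> 'cV[R]_mx)
  (tau : 'I_nuo.+1 -> nat) (yo : 'I_nuo.+1 -> 'cV[R]_my) (pi : nat -> 'cV[R]_npi).
Variables (mX : nat) (AX : 'M[R]_(mX, nx)) (bX : 'cV[R]_mX)
  (mU : nat) (AU : 'M[R]_(mU, nu)) (bU : 'cV[R]_mU)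
  (mTh : nat) (ATh : 'M[R]_(mTh, nth)) (bTh : 'cV[R]_mTh).
Hypothesis hX : forall x, X x <-> leV (AX *m x) bX.
Hypothesis hU : forall u, U u <-> leV (AU *m u) bU.
Hypothesis hTh : forall th, Th th <-> leV (ATh *m th) bTh.
Variables (MX MU MTh : R).
Hypothesis bdX : forall x, X x -> forall i, `|x i 0| <= MX.
Hypothesis bdU : forall x, U x -> forall i, `|x i 0| <= MU.
Hypothesis bdTh : forall x, Th x -> forall i, `|x i 0| <= MTh.
Hypothesis PSDQ : PSD Q.
Hypothesis hpiece : forall t, (t <= N)%N -> forall x u th, X x -> U u -> Th th ->
  exists i, leV (Bg i *m cat4 x u th (pi t)) (psi i).
Hypothesis hgval : forall t, (t <= N)%N -> forall x u th i, X x -> U u -> Th th ->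
  leV (Bg i *m cat4 x u th (pi t)) (psi i) ->
  g x u th (pi t) = G i *m cat4 x u th (pi t) + chi i.
Hypothesis hmx : log_density_milp pnu mx.
Hypothesis hmy : log_density_milp pom my.

Definition TV : finType :=
  ((('I_N.+2 * 'I_nx) + ('I_N.+2 * 'I_nth)) + ('I_N.+1 * 'I_nu))%type.
Definition Vall : finType := (TV + ('I_nxo.+1 + 'I_nuo.+1))%type.
Definition cx t i : Vall := inl (inl (inl (inord t, i))).
Definition cth t i : Vall := inl (inl (inr (inord t, i))).
Definition cu t i : Vall := inl (inr (inord t, i)).
Definition cs i : Vall := inr (inl i).
Definition cr j : Vall := inr (inr j).

Definition xf (xi : Vall -> R) t : 'cV[R]_nx :=
  if (t <= N.+1)%N then \col_i xi (cx t i) else 0.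
Definition thf (xi : Vall -> R) t : 'cV[R]_nth :=
  if (t <= N.+1)%N then \col_i xi (cth t i) else 0.
Definition uf (xi : Vall -> R) t : 'cV[R]_nu :=
  if (t <= N)%N then \col_i xi (cu t i) else 0.

Lemma affv_xf t : affv (fun xi => xf xi t).
Proof. rewrite /xf; case: (t <= N.+1)%N; [exact: affv_col|exact: affv_cst]. Qed.
Lemma affv_thf t : affv (fun xi => thf xi t).
Proof. rewrite /thf; case: (t <= N.+1)%N; [exact: affv_col|exact: affv_cst]. Qed.
Lemma affv_uf t : affv (fun xi => uf xi t).
Proof. rewrite /uf; case: (t <= N)%N; [exact: affv_col|exact: affv_cst]. Qed.

Definition ff := f_util Q H F zeta.
Definition hf := fun (x : 'cV[R]_nx) (u : 'cV[R]_nu) => A *m x + B *m u + k.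

Definition Feas (xi : Vall -> R) := traj_feasible X U Th ff hf g pi N (xf xi) (uf xi) (thf xi).

Definition Hyp (xi : Vall -> R) :=
  (forall i, 0 < pvec pnu (xo i - D *m xf xi (tx i)) /\
             xi (cs i) <= ln (pvec pnu (xo i - D *m xf xi (tx i)))) /\
  (forall j, 0 < pvec pom (yo j - C *m uf xi (tau j)) /\
             xi (cr j) <= ln (pvec pom (yo j - C *m uf xi (tau j)))).

Definition locA (t : nat) (xi : Vall -> R) : Vt nx nu nth -> R :=
  fun v => match v with
  | inl (inl i) => xi (cx t i) | inl (inr i) => xi (cth t i) | inr i => xi (cu t i) end.
Definition locG (t : nat) (xi : Vall -> R) : Vg nx nu nth -> R :=
  fun v => match v with
  | inl (inl (inl i)) => xi (cx t i) | inl (inl (inr i)) => xi (cu t i)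
  | inl (inr i) => xi (cth t i) | inr i => xi (cth t.+1 i) end.

Definition FD (xi : Vall -> R) :=
  (forall t : 'I_N.+1,
     [/\ AM Q H F zeta A B k (pi t) X U Th (locA t xi),
         GS X U Th g (pi t) (locG t xi) &
         forall i, (xf xi t.+1) i 0 - (A *m xf xi t + B *m uf xi t + k) i 0 = 0]) /\
  (forall t : 'I_N.+2, X (xf xi t) /\ Th (thf xi t)).

Lemma xfE xi t : (t <= N.+1)%N -> xf xi t = \col_i xi (cx t i).
Proof. by rewrite /xf => ->. Qed.
Lemma thfE xi t : (t <= N.+1)%N -> thf xi t = \col_i xi (cth t i).
Proof. by rewrite /thf => ->. Qed.
Lemma ufE xi t : (t <= N)%N -> uf xi t = \col_i xi (cu t i).
Proof. by rewrite /uf => ->. Qed.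

Lemma Feas_FD xi : Feas xi <-> FD xi.
Proof.
have lt1 : forall t : 'I_N.+1, (t <= N.+1)%N by move=> t; rewrite ltnW // ltn_ord.
have lt0 : forall t : 'I_N.+1, (t <= N)%N by move=> t; rewrite -ltnS ltn_ord.
have lt2 : forall t : 'I_N.+1, (t.+1 <= N.+1)%N by move=> t; rewrite ltnS lt0.
split.
  move=> [h1 h2]; split.
    move=> t; have [hu hopt hx hth] := h1 t (lt0 t).
    have [hXt hTt] := h2 t (lt1 t).
    have [hXt' hTt'] := h2 t.+1 (lt2 t).
    rewrite /AM /GS /xv /thv /uv /xg /ug /thg /th2.
    rewrite (xfE xi (lt1 t)) (thfE xi (lt1 t)) (ufE xi (lt0 t)) in hu hopt hx hth hXt hTt.
    rewrite (xfE xi (lt2 t)) (thfE xi (lt2 t)) in hx hth hXt' hTt'.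
    split.
    - split=> //.
    - by split=> //; rewrite -hth.
    - move=> i; rewrite (xfE xi (lt2 t)) (xfE xi (lt1 t)) (ufE xi (lt0 t)) hx.
      by rewrite subrr.
  move=> t; apply: h2; by rewrite -ltnS ltn_ord.
move=> [h1 h2]; split; last first.
  move=> t ht; have := h2 (Ordinal (ht : (t < N.+2)%N)); by [].
move=> t ht.
have [hA hG hD] := h1 (Ordinal (ht : (t < N.+1)%N)).
move: hA hG hD; rewrite /AM /GS /xv /thv /uv /xg /ug /thg /th2 /=.
have t1 : (t <= N.+1)%N by rewrite ltnW.
have t2 : (t.+1 <= N.+1)%N by [].
rewrite (xfE xi t1) (thfE xi t1) (ufE xi ht) (xfE xi t2) (thfE xi t2).
move=> [hXt hTt hUt hopt] [_ _ _ hT2 hth] hD.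
split=> //.
apply/matrixP => i j; rewrite (ord1 j); apply/eqP; rewrite -subr_eq0; apply/eqP.
by have := hD i.
Qed.

Lemma FD_rep : mirep FD.
Proof.
have lt0 : forall t : 'I_N.+1, (t <= N)%N by move=> t; rewrite -ltnS ltn_ord.
apply: mirep_and.
  apply: mirep_all => t.
  have h1 : mirep (fun xi => AM Q H F zeta A B k (pi t) X U Th (locA t xi)).
    apply: (mirep_ext (mirep_pre (L := fun v xi => locA t xi v)
      (argmax_rep H F zeta A B k (pi t) PSDQ hX hU hTh bdX bdU bdTh) _)).
      by case=> [[i|i]|i]; exact: aff_var.
    by move=> xi.
  have h2 : mirep (fun xi => GS X U Th g (pi t) (locG t xi)).
    apply: (mirep_ext (mirep_pre (L := fun v xi => locG t xi v)
      (g_rep hX hU hTh bdX bdU bdTh (hpiece (lt0 t)) (hgval (lt0 t))) _)).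
      by case=> [[[i|i]|i]|i]; exact: aff_var.
    by move=> xi.
  have h3 : mirep (fun xi => forall i,
      (xf xi t.+1) i 0 - (A *m xf xi t + B *m uf xi t + k) i 0 = 0).
    pose L := fun (ib : 'I_nx * bool) (xi : Vall -> R) =>
      if ib.2 then (xf xi t.+1) ib.1 0 - (A *m xf xi t + B *m uf xi t + k) ib.1 0
      else - ((xf xi t.+1) ib.1 0 - (A *m xf xi t + B *m uf xi t + k) ib.1 0).
    apply: (mirep_ext (mirep_poly (L := L) _)).
      case=> i b; rewrite /L /=.
      have ha : aff (fun xi => (xf xi t.+1) i 0 - (A *m xf xi t + B *m uf xi t + k) i 0).
        apply: aff_sub; first exact: affv_xf.
        apply: (affv_add (affv_add (affv_mul A (affv_xf t)) (affv_mul B (affv_uf t)))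
          (affv_cst _ k) i).
      by case: b => //; apply: aff_opp.
    move=> xi; split.
      move=> h i; apply/eqP; rewrite eq_le; apply/andP; split.
        exact: (h (i, true)).
      by rewrite -oppr_le0; exact: (h (i, false)).
    by move=> h [i []]; rewrite /L /= h ?oppr0.
  apply: (mirep_ext (mirep_and h1 (mirep_and h2 h3))).
  by move=> xi; split=> [[a [b c]]|[a b c]].
apply: mirep_all => t.
pose L := fun (ab : 'I_mX + 'I_mTh) (xi : Vall -> R) =>
  match ab with inl a => (AX *m xf xi t) a 0 - bX a 0 | inr a => (ATh *m thf xi t) a 0 - bTh a 0 end.
apply: (mirep_ext (mirep_poly (L := L) _)).
  case=> a; rewrite /L.
    apply: aff_sub; [exact: (affv_mul AX (affv_xf t) a)|exact: aff_cst].
  apply: aff_sub; [exact: (affv_mul ATh (affv_thf t) a)|exact: aff_cst].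
move=> xi; split.
  move=> h; split.
    by apply/hX/leV_rows => a; exact: (h (inl a)).
  by apply/hTh/leV_rows => a; exact: (h (inr a)).
move=> [/hX/leV_rows h1 /hTh/leV_rows h2] [a|a]; [exact: h1|exact: h2].
Qed.

Lemma hyp1_rep (n : nat) (p0 : R -> R) (hm : log_density_milp p0 n)
  (E : (Vall -> R) -> 'cV[R]_n) (c : Vall) :
  affv E ->
  mirep (fun xi => 0 < pvec p0 (E xi) /\ xi c <= ln (pvec p0 (E xi))).
Proof.
move=> hE.
apply: (mirep_ext (mirep_pre (L := fun jj xi => (col_mx (E xi) (\col_(_ < 1) xi c)) jj 0)
  (mis_rep hm) _)).
  move=> jj; apply: (affv_colmx hE _ jj); exact: affv_col.
move=> xi.
rewrite col_id col_mxKu col_mxKd mxE.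
by [].
Qed.

Lemma Hyp_rep : mirep Hyp.
Proof.
apply: mirep_and; apply: mirep_all => i; apply: hyp1_rep => //.
  apply: affv_sub; [exact: affv_cst|apply: affv_mul; exact: affv_xf].
apply: affv_sub; [exact: affv_cst|apply: affv_mul; exact: affv_uf].
Qed.

Lemma S_rep : mirep (fun xi => Feas xi /\ Hyp xi).
Proof.
apply: (mirep_ext (mirep_and FD_rep Hyp_rep)).
move=> xi; split=> [[h1 h2]|[h1 h2]]; split=> //; by apply/Feas_FD.
Qed.

Hypothesis htx : forall i, (tx i <= N.+1)%N.
Hypothesis htau : forall j, (tau j <= N)%N.

Lemma sum_enum_val (Z : finType) (Fz : Z -> R) :
  \sum_(j' < #|Z|) Fz (enum_val j') = \sum_j Fz j.
Proof.
rewrite -(big_enum_val (A := Z)) /=.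
by apply: eq_bigl => j; rewrite inE.
Qed.

Lemma sum_delta_enum (Z : finType) (e : Z) (zv : 'cV[R]_#|Z|) :
  \sum_(j' < #|Z|) (enum_val j' == e)%:R * zv j' 0 = zv (enum_rank e) 0.
Proof.
have := sum_enum_val (fun j => (j == e)%:R * zv (enum_rank j) 0).
rewrite sum_delta => <-; apply: eq_bigr => j' _ /=; by rewrite enum_valK.
Qed.

Lemma traj_ext (x x' : nat -> 'cV[R]_nx) (u u' : nat -> 'cV[R]_nu) (th th' : nat -> 'cV[R]_nth) :
  (forall t, (t <= N.+1)%N -> x' t = x t /\ th' t = th t) ->
  (forall t, (t <= N)%N -> u' t = u t) ->
  traj_feasible X U Th ff hf g pi N x u th -> traj_feasible X U Th ff hf g pi N x' u' th'.
Proof.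
move=> ex eu [h1 h2]; split.
  move=> t ht; have t1 : (t <= N.+1)%N by rewrite ltnW.
  have t2 : (t.+1 <= N.+1)%N by [].
  have [ex1 eth1] := ex t t1; have [ex2 eth2] := ex t.+1 t2.
  rewrite ex1 eth1 ex2 eth2 (eu t ht); exact: h1.
move=> t ht; have [ex1 eth1] := ex t ht; rewrite ex1 eth1; exact: h2.
Qed.

Lemma final_milp : milp_expressible N
    (traj_feasible X U Th ff hf g pi N)
    (fun x u _ => lik_pos pnu pom D C tx xo tau yo x u)
    (fun x u _ => loglik pnu pom D C tx xo tau yo x u).
Proof.
have [Z [Rw [emb [a [b [I hS]]]]]] := S_rep.
pose Amat := \matrix_(r', j') a (enum_val r') (enum_val j') : 'M[R]_(#|Rw|, #|Z|).
pose bvec := \col_r' b (enum_val r') : 'cV[R]_#|Rw|.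
pose cvec := \col_j' (\sum_i (enum_val j' == emb (cs i))%:R
                     + \sum_j (enum_val j' == emb (cr j))%:R) : 'cV[R]_#|Z|.
pose Ip := [pred j' : 'I_#|Z| | I (enum_val j')].
pose Sx := fun t => \matrix_(i, j') (if (t <= N.+1)%N then (enum_val j' == emb (cx t i))%:R else 0)
  : 'M[R]_(nx, #|Z|).
pose Sth := fun t => \matrix_(i, j') (if (t <= N.+1)%N then (enum_val j' == emb (cth t i))%:R else 0)
  : 'M[R]_(nth, #|Z|).
pose Su := fun t => \matrix_(i, j') (if (t <= N)%N then (enum_val j' == emb (cu t i))%:R else 0)
  : 'M[R]_(nu, #|Z|).
pose xiz := fun (zv : 'cV[R]_#|Z|) (v : Vall) => zv (enum_rank (emb v)) 0.
have hA : forall (zv : 'cV[R]_#|Z|) r', (Amat *m zv) r' 0 = \sum_j a (enum_val r') j * zv (enum_rank j) 0.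
  move=> z0 q; rewrite mxE -[RHS]sum_enum_val; apply: eq_bigr => j0 _.
  by rewrite mxE enum_valK.
have hSx : forall (zv : 'cV[R]_#|Z|) t, Sx t *m zv = xf (xiz zv) t.
  move=> zv t; apply/matrixP => i c; rewrite (ord1 c) mxE /xf.
  case: ifP => ht.
    rewrite mxE /xiz -(sum_delta_enum (emb (cx t i)) zv); apply: eq_bigr => j' _.
    by rewrite mxE ht.
  by rewrite mxE big1 // => j' _; rewrite mxE ht mul0r.
have hSth : forall (zv : 'cV[R]_#|Z|) t, Sth t *m zv = thf (xiz zv) t.
  move=> zv t; apply/matrixP => i c; rewrite (ord1 c) mxE /thf.
  case: ifP => ht.
    rewrite mxE /xiz -(sum_delta_enum (emb (cth t i)) zv); apply: eq_bigr => j' _.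
    by rewrite mxE ht.
  by rewrite mxE big1 // => j' _; rewrite mxE ht mul0r.
have hSu : forall (zv : 'cV[R]_#|Z|) t, Su t *m zv = uf (xiz zv) t.
  move=> zv t; apply/matrixP => i c; rewrite (ord1 c) mxE /uf.
  case: ifP => ht.
    rewrite mxE /xiz -(sum_delta_enum (emb (cu t i)) zv); apply: eq_bigr => j' _.
    by rewrite mxE ht.
  by rewrite mxE big1 // => j' _; rewrite mxE ht mul0r.
have hc : forall zv : 'cV[R]_#|Z|, (cvec^T *m zv) 0 0 =
    \sum_i xiz zv (cs i) + \sum_j xiz zv (cr j).
  move=> zv; rewrite mxE.
  under eq_bigr do rewrite !mxE mulrDl !mulr_suml.
  rewrite big_split /=; congr (_ + _); rewrite exchange_big /=; apply: eq_bigr => i _;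
    by rewrite /xiz -(sum_delta_enum _ zv).
exists #|Z|, #|Rw|, Amat, bvec, cvec, Ip, Sx, Su, Sth; split.
  move=> zv hle hint; cbv zeta.
  have hSxi : Feas (xiz zv) /\ Hyp (xiz zv).
    apply/hS; exists (fun j => zv (enum_rank j) 0); split=> //.
      move=> rr; have := hle (enum_rank rr); rewrite hA /bvec mxE enum_rankK //.
    move=> j hj; have := hint (enum_rank j); rewrite /Ip /= enum_rankK; exact.
  have ex : (fun t => Sx t *m zv) = xf (xiz zv) by apply: funext => t; exact: hSx.
  have eu : (fun t => Su t *m zv) = uf (xiz zv) by apply: funext => t; exact: hSu.
  have eth : (fun t => Sth t *m zv) = thf (xiz zv) by apply: funext => t; exact: hSth.
  rewrite ex eu eth.
  have [hF [hH1 hH2]] := hSxi.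
  split=> //.
    by split=> [i|j]; [exact: (hH1 i).1|exact: (hH2 j).1].
  rewrite hc /loglik; apply: lerD; apply: ler_sum => i _; [exact: (hH1 i).2|exact: (hH2 i).2].
move=> x u th hF hP.
pose xi := fun v : Vall => match v with
  | inl (inl (inl (t, i))) => x t i 0
  | inl (inl (inr (t, i))) => th t i 0
  | inl (inr (t, i)) => u t i 0
  | inr (inl i) => ln (pvec pnu (xo i - D *m x (tx i)))
  | inr (inr j) => ln (pvec pom (yo j - C *m u (tau j)))
  end.
have exf : forall t, (t <= N.+1)%N -> xf xi t = x t.
  move=> t ht; rewrite (xfE xi ht); apply/matrixP => i c; rewrite (ord1 c) mxE /=.
  by rewrite inordK.
have ethf : forall t, (t <= N.+1)%N -> thf xi t = th t.
  move=> t ht; rewrite (thfE xi ht); apply/matrixP => i c; rewrite (ord1 c) mxE /=.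
  by rewrite inordK.
have euf : forall t, (t <= N)%N -> uf xi t = u t.
  move=> t ht; rewrite (ufE xi ht); apply/matrixP => i c; rewrite (ord1 c) mxE /=.
  by rewrite inordK.
have hSxi : Feas xi /\ Hyp xi.
  split.
    apply: (traj_ext _ _ hF).
      by move=> t ht; rewrite exf // ethf.
    by move=> t ht; rewrite euf.
  have [hP1 hP2] := hP.
  split=> [i|j].
    by rewrite exf //; split=> //; exact: hP1.
  by rewrite euf //; split=> //; exact: hP2.
have [xZ [he hr hi]] := (hS xi).1 hSxi.
pose zv := \col_j' xZ (enum_val j') : 'cV[R]_#|Z|.
have exz : xiz zv = xi.
  by apply: funext => v; rewrite /xiz /zv mxE enum_rankK he.
exists zv; split.
- move=> r'; rewrite hA /bvec mxE.
  apply: le_trans (hr (enum_val r')); rewrite le_eqVlt; apply/orP; left; apply/eqP.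
  by apply: eq_bigr => j _; rewrite /zv mxE enum_rankK.
- by move=> j' hj; rewrite /zv mxE; exact: hi.
- move=> t ht; rewrite hSx hSth exz; split; [exact: exf | exact: ethf].
- by move=> t ht; rewrite hSu exz; exact: euf.
- by rewrite hc exz.
Qed.

End Final.


Unset Implicit Arguments.
Set Strict Implicit.

Theorem corollary1 (R : realType) (nx nu nth npi mx my : nat)
  (X : 'cV[R]_nx -> Prop) (U : 'cV[R]_nu -> Prop) (Th : 'cV[R]_nth -> Prop)
  (Pi : 'cV[R]_npi -> Prop)
  (* data of f (A2) *)
  (Q : 'M[R]_(nx + nu)) (H : 'M[R]_(nth + npi, nx + nu))
  (K : nat) (m : 'I_K -> nat)
  (F : forall i : 'I_K, 'I_(m i).+1 -> 'rV[R]_(nx + nu + nth + npi))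
  (zeta : forall i : 'I_K, 'I_(m i).+1 -> R)
  (* data of h and g (A3) *)
  (A : 'M[R]_nx) (B : 'M[R]_(nx, nu)) (k : 'cV[R]_nx)
  (g : 'cV[R]_nx -> 'cV[R]_nu -> 'cV[R]_nth -> 'cV[R]_npi -> 'cV[R]_nth)
  (P : nat) (r : 'I_P -> nat)
  (Bg : forall i : 'I_P, 'M[R]_(r i, nx + nu + nth + npi))
  (psi : forall i : 'I_P, 'cV[R]_(r i))
  (G : forall i : 'I_P, 'M[R]_(nth, nx + nu + nth + npi))
  (chi : forall i : 'I_P, 'cV[R]_nth)
  (* observation model (A4) *)
  (D : 'M[R]_(mx, nx)) (C : 'M[R]_(my, nu)) (pnu pom : R -> R)
  (* the estimation problem: horizon, measurement times, data, incentives *)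
  (N nxo nuo : nat) (tx : 'I_nxo.+1 -> nat) (xo : 'I_nxo.+1 -> 'cV[R]_mx)
  (tau : 'I_nuo.+1 -> nat) (yo : 'I_nuo.+1 -> 'cV[R]_my)
  (pi : nat -> 'cV[R]_npi) :
  let f := f_util Q H F zeta in
  let h := fun (x : 'cV[R]_nx) (u : 'cV[R]_nu) => A *m x + B *m u + k in
  let dom := fun x u th p => [/\ X x, U u, Th th & Pi p] in
  (* (A1) *)
  polyhedron X -> box_bounded X ->
  polyhedron U -> box_bounded U ->
  polyhedron Th -> box_bounded Th ->
  mixed_integer_set Pi -> box_bounded Pi ->
  (* (A2) *)
  PSD Q ->
  (forall u th p, U u -> Th th -> Pi p -> concave_on X (fun x => f x u th p)) ->
  (forall x th p, X x -> Th th -> Pi p ->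
     strictly_concave_on U (fun u => f x u th p)) ->
  (forall x u p, X x -> U u -> Pi p -> concave_on Th (fun th => f x u th p)) ->
  (* (A3) *)
  (forall x', X x' -> exists x u, [/\ X x, U u & h x u = x']) ->
  (forall th', Th th' -> exists x u th p, dom x u th p /\ g x u th p = th') ->
  (forall x u th p, dom x u th p ->
     exists i, leV (Bg i *m cat4 x u th p) (psi i)) ->
  (forall x u th p i, dom x u th p -> leV (Bg i *m cat4 x u th p) (psi i) ->
     g x u th p = G i *m cat4 x u th p + chi i) ->
  (forall i j, i != j -> forall z,
     ~ (in_interior (fun w => leV (Bg i *m w) (psi i)) z /\
        in_interior (fun w => leV (Bg j *m w) (psi j)) z)) ->
  (* (A4) *)
  noise_density pnu -> noise_density pom ->
  log_density_milp pnu mx -> log_density_milp pom my ->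
  (* (A5) observability *)
  (exists (T : nat) (pio : nat -> 'cV[R]_npi),
     (forall t, Pi (pio t)) /\
     forall x u th x' u' th',
       traj_feasible X U Th f h g pio T x u th ->
       traj_feasible X U Th f h g pio T x' u' th' ->
       (forall t, (t <= T)%N -> D *m x t = D *m x' t /\ C *m u t = C *m u' t) ->
       x 0%N = x' 0%N /\ th 0%N = th' 0%N) ->
  (* the given incentives and the measurement times lie in the horizon *)
  (forall t, (t <= N)%N -> Pi (pi t)) ->
  (forall i, (tx i <= N.+1)%N) -> (forall j, (tau j <= N)%N) ->
  milp_expressible N
    (traj_feasible X U Th f h g pi N)
    (fun x u _ => lik_pos pnu pom D C tx xo tau yo x u)
    (fun x u _ => loglik pnu pom D C tx xo tau yo x u).
Proof.
move=> f h dom [mX [AX [bX hX]]] [MX bdX] [mU [AU [bU hU]]] [MU bdU]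
  [mTh [ATh [bTh hTh]]] [MTh bdTh] _ _ PSDQ _ _ _ _ _ hpc hgv _ _ _ hmx hmy _ hpi htx htau.
have hpiece : forall t, (t <= N)%N -> forall x u th, X x -> U u -> Th th ->
    exists i, leV (Bg i *m cat4 x u th (pi t)) (psi i).
  move=> t ht x u th hx hu hth; apply: hpc; split=> //; exact: hpi.
have hgval : forall t, (t <= N)%N -> forall x u th i, X x -> U u -> Th th ->
    leV (Bg i *m cat4 x u th (pi t)) (psi i) ->
    g x u th (pi t) = G i *m cat4 x u th (pi t) + chi i.
  move=> t ht x u th i hx hu hth hi; apply: hgv => //; split=> //; exact: hpi.
exact: (final_milp H F zeta A B k D C xo yo hX hU hTh bdX bdU bdTh PSDQ
  hpiece hgval hmx hmy htx htau).
Qed.
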